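(* Consider the heterogeneous cone percolation process on $\mathbb{T}_d^+$. If for some positive integer $n$ $$\liminf_{j\to\infty}\ d^n\prod_{k=0}^{n-1}\Big[1-\prod_{i=0}^{k}\mathbb{P}[R_{jn+i}<k+1-i]\Big] > 1,$$ then with positive probability the set $I$ of vertices reached from $\mathcal{O}$ is infinite (the process has a giant component with positive probability).
   Context: Let $d\ge2$, let $\mathbb{T}_d$ be the infinite tree in which every vertex has $d+1$ neighbours, with a fixed origin $\mathcal{O}$; $d(u,v)$ is graph distance and $u\le v$ means $u$ lies on the path from $\mathcal{O}$ to $v$. Fix a neighbour $w$ of $\mathcal{O}$ and let $\mathbb{T}_d^+$ be the subtree obtained by deleting all $x$ with $w\le x$; every vertex of $\mathbb{T}_d^+$ has exactly $d$ children. Heterogeneous cone percolation on $\mathbb{T}_d^+$: let $(R_z)_{z\in\mathbb{N}}$ be independent random variables with values in $\{0,1,2,\dots\}$ and $\mathbb{P}[R_z=0]<1$ for all $z$; let $(\bar R_u)_{u\in\mathbb{T}_d^+}$ be independent random variables with $\bar R_u$ distributed as $R_{d(\mathcal{O},u)}$. Let $B_u=\{v\in\mathbb{T}_d^+: u\le v,\ d(u,v)\le \bar R_u\}$, $I_0=\{\mathcal{O}\}$, $I_{m+1}=\bigcup_{x\in I_m}B_x$, $I=\bigcup_{m\ge0}I_m$. *)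

(* Defs.v *)
From Stdlib Require Import Reals List Arith.
Import ListNotations.
Open Scope R_scope.

(* Vertices of T_d^+ : finite words over {0,...,d-1}; [] is the origin O.
   The children of u are u ++ [i], i < d.  d(O,u) = length u. *)
Definition valid (d : nat) (u : list nat) : Prop := Forall (fun i => (i < d)%nat) u.

Definition prefix (u v : list nat) : Prop := exists w, v = u ++ w.

Record is_prob_space {Omega : Type} (F : (Omega -> Prop) -> Prop)
    (P : (Omega -> Prop) -> R) : Prop := {
  ps_full : F (fun _ => True);
  ps_compl : forall A, F A -> F (fun w => ~ A w);
  ps_union : forall A : nat -> Omega -> Prop,
      (forall n, F (A n)) -> F (fun w => exists n, A n w);
  ps_nonneg : forall A, F A -> 0 <= P A;
  ps_total : P (fun _ => True) = 1;
  ps_additive : forall A : nat -> Omega -> Prop,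
      (forall n, F (A n)) ->
      (forall m n, m <> n -> forall w, A m w -> A n w -> False) ->
      infinite_sum (fun n => P (A n)) (P (fun w => exists n, A n w))
}.

Definition nat_rv {Omega : Type} (F : (Omega -> Prop) -> Prop) (X : Omega -> nat) : Prop :=
  forall k, F (fun w => X w = k).

Definition prodR (l : list R) : R := fold_right Rmult 1 l.

Definition independent {Omega I : Type} (P : (Omega -> Prop) -> R)
    (J : I -> Prop) (X : I -> Omega -> nat) : Prop :=
  forall (l : list I) (f : I -> nat), NoDup l -> Forall J l ->
    P (fun w => Forall (fun i => X i w = f i) l)
    = prodR (map (fun i => P (fun w => X i w = f i)) l).

(* The set I of vertices reached from O, given the realised radii Rb:
   I_0 = {O}, I_{m+1} = union of B_x, x in I_m, where
   B_x = { v : x <= v, d(x,v) <= Rb x }.  I = union of the I_m. *)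
Inductive reached (d : nat) (Rb : list nat -> nat) : list nat -> Prop :=
| reached_root : reached d Rb []
| reached_step : forall x v, reached d Rb x -> valid d v -> prefix x v ->
    (length v - length x <= Rb x)%nat -> reached d Rb v.

Definition infinite_set (S : list nat -> Prop) : Prop :=
  forall l : list (list nat), exists v, S v /\ ~ In v l.

Definition cone_quantity {Omega : Type} (P : (Omega -> Prop) -> R)
    (R_ : nat -> Omega -> nat) (d n j : nat) : R :=
  INR d ^ n *
  prodR (map (fun k =>
     1 - prodR (map (fun i => P (fun w => (R_ (j * n + i)%nat w < S k - i)%nat))
                    (seq 0 (S k))))
   (seq 0 n)).

(* Main.v *)
Require Import Defs.
From Stdlib Require Import Reals List Arith Lia Lra Permutation.
From Stdlib Require Import FunctionalExtensionality PropExtensionality ClassicalEpsilon Classical.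
Import ListNotations.
Open Scope R_scope.

Definition sumRl (l : list R) : R := fold_right Rplus 0 l.

Lemma sumRl_app l1 l2 : sumRl (l1 ++ l2) = sumRl l1 + sumRl l2.
Proof. induction l1; simpl; [ring| rewrite IHl1; ring]. Qed.

Lemma sum_f_R0_seq (f : nat -> R) m : sum_f_R0 f m = sumRl (map f (seq 0 (S m))).
Proof.
  induction m.
  - simpl. ring.
  - rewrite seq_S, map_app, sumRl_app. rewrite <- IHm. simpl. ring.
Qed.

Lemma sumRl_seq_zero (f : nat -> R) N K : (N <= K)%nat -> (forall i, (N <= i)%nat -> f i = 0) ->
  sumRl (map f (seq 0 K)) = sumRl (map f (seq 0 N)).
Proof.
  intros H Hz. induction H.
  - reflexivity.
  - rewrite seq_S, map_app, sumRl_app, IHle. simpl. rewrite Hz by lia. ring.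
Qed.

Lemma ev_ext {Omega : Type} (A B : Omega -> Prop) : (forall w, A w <-> B w) -> A = B.
Proof. intros H. apply functional_extensionality; intro w. apply propositional_extensionality, H. Qed.

Section Prob.
Context {Omega : Type} (F : (Omega -> Prop) -> Prop) (P : (Omega -> Prop) -> R)
  (hP : is_prob_space F P).

Lemma P_ext A B : (forall w, A w <-> B w) -> P A = P B.
Proof. intros H; rewrite (ev_ext A B H); reflexivity. Qed.

Lemma F_ext A B : (forall w, A w <-> B w) -> F A -> F B.
Proof. intros H; rewrite (ev_ext A B H); auto. Qed.

Lemma F_false : F (fun _ => False).
Proof.
  eapply F_ext; [| apply (ps_compl _ _ hP _ (ps_full _ _ hP))]. simpl. tauto.
Qed.

Lemma F_or A B : F A -> F B -> F (fun w => A w \/ B w).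
Proof.
  intros HA HB.
  apply F_ext with (A := fun w => exists n:nat, (fun n w => if Nat.eq_dec n 0 then A w else B w) n w).
  - intro w. split.
    + intros [k Hk]. destruct (Nat.eq_dec k 0); auto.
    + intros [H|H]; [exists 0%nat | exists 1%nat]; simpl; auto.
  - apply (ps_union _ _ hP). intro k. destruct (Nat.eq_dec k 0); auto.
Qed.

Lemma F_not A : F A -> F (fun w => ~ A w).
Proof. apply (ps_compl _ _ hP). Qed.

Lemma F_and A B : F A -> F B -> F (fun w => A w /\ B w).
Proof.
  intros HA HB. apply F_ext with (A := fun w => ~ (~ A w \/ ~ B w)).
  - intro w; simpl. tauto.
  - apply F_not, F_or; apply F_not; assumption.
Qed.

Lemma F_true : F (fun _ => True).
Proof. apply (ps_full _ _ hP). Qed.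

Lemma F_exists (A : nat -> Omega -> Prop) : (forall n, F (A n)) -> F (fun w => exists n, A n w).
Proof. apply (ps_union _ _ hP). Qed.

Lemma F_forall (A : nat -> Omega -> Prop) : (forall n, F (A n)) -> F (fun w => forall n, A n w).
Proof.
  intros H. apply F_ext with (A := fun w => ~ exists n, ~ A n w); [| apply F_not, F_exists; intro n; apply F_not, H].
  intro w; simpl. split.
  - intros Hn n. apply NNPP. intro Hc. apply Hn. eauto.
  - intros Hn [n Hc]. auto.
Qed.

Lemma F_const (Q : Prop) : F (fun _ => Q).
Proof.
  destruct (classic Q) as [HQ|HQ].
  - eapply F_ext; [|apply F_true]. simpl; tauto.
  - eapply F_ext; [|apply F_false]. simpl; tauto.
Qed.

Lemma P_false : P (fun _ => False) = 0.
Proof.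
  pose proof (ps_additive _ _ hP (fun _ _ => False) (fun _ => F_false)) as H.
  assert (Hd : forall m n : nat, m <> n -> forall w : Omega, False -> False -> False) by tauto.
  specialize (H Hd). simpl in H.
  rewrite (P_ext (fun w => exists _ : nat, False) (fun _ => False)) in H by (intro; split; [intros [_ x]; exact x| tauto]).
  set (c := P (fun _ => False)) in *.
  destruct (Req_dec c 0) as [E|E]; auto. exfalso.
  destruct (H (Rabs c)) as [N HN]. { apply Rabs_pos_lt; auto. }
  specialize (HN (S N) ltac:(lia)).
  rewrite sum_f_R0_seq in HN.
  assert (Hs : forall k, sumRl (map (fun _ : nat => c) (seq 0 k)) = INR k * c).
  { intro k. induction k. simpl; ring. rewrite seq_S, map_app, sumRl_app, IHk, S_INR. simpl. ring. }
  rewrite Hs in HN. unfold Rdist in HN.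
  replace (INR (S (S N)) * c - c) with (INR (S N) * c) in HN by (rewrite (S_INR (S N)); ring).
  rewrite Rabs_mult, Rabs_pos_eq in HN by apply pos_INR.
  assert (1 <= INR (S N)) by (rewrite S_INR; pose proof (pos_INR N); lra).
  pose proof (Rabs_pos c). nra.
Qed.

Lemma P_FA (N : nat) (A : nat -> Omega -> Prop) :
  (forall i, (i < N)%nat -> F (A i)) ->
  (forall i j, (i < N)%nat -> (j < N)%nat -> i <> j -> forall w, A i w -> A j w -> False) ->
  P (fun w => exists i, (i < N)%nat /\ A i w) = sumRl (map (fun i => P (A i)) (seq 0 N)).
Proof.
  intros HF HD.
  set (B := fun i w => (i < N)%nat /\ A i w).
  assert (HB : forall n, F (B n)).
  { intro n. unfold B. destruct (lt_dec n N).
    - eapply F_ext; [|apply (HF n l)]. simpl. tauto.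
    - eapply F_ext; [|apply F_false]. simpl. tauto. }
  pose proof (ps_additive _ _ hP B HB) as H.
  assert (HBd : forall m n, m <> n -> forall w, B m w -> B n w -> False).
  { unfold B; intros m n Hmn w [Hm Am] [Hn An]; eauto. }
  specialize (H HBd).
  assert (Hz : forall i, (N <= i)%nat -> P (B i) = 0).
  { intros i Hi. rewrite <- P_false. apply P_ext. unfold B; intro; split; [lia|tauto]. }
  assert (H2 : infinite_sum (fun i => P (B i)) (sumRl (map (fun i => P (B i)) (seq 0 N)))).
  { intros eps Heps. exists N. intros m Hm. rewrite sum_f_R0_seq.
    rewrite (sumRl_seq_zero _ N (S m)) by (auto; lia). unfold Rdist.
    rewrite Rminus_diag, Rabs_R0. lra. }
  pose proof (uniqueness_sum _ _ _ H H2) as E.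
  unfold B in E at 1. rewrite E.
  f_equal. apply map_ext_in. intros i Hi. apply in_seq in Hi.
  apply P_ext. unfold B. intro; split; [tauto| intros; split; [lia|auto]].
Qed.

Lemma P_compl A : F A -> P (fun w => ~ A w) = 1 - P A.
Proof.
  intros HA.
  pose proof (P_FA 2 (fun i => if Nat.eq_dec i 0 then A else fun w => ~ A w)) as H.
  simpl in H.
  rewrite (P_ext _ (fun _ => True)) in H.
  - rewrite (ps_total _ _ hP) in H. rewrite H; [ring| |].
    + intros i Hi. destruct (Nat.eq_dec i 0); auto. apply F_not; auto.
    + intros i j Hi Hj Hij w. destruct (Nat.eq_dec i 0), (Nat.eq_dec j 0); try lia; tauto.
  - intro w; split; auto. intros _. destruct (classic (A w)).
    + exists 0%nat; simpl; split; [lia|auto].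
    + exists 1%nat; simpl; split; [lia|auto].
Qed.

Lemma P_split A B : F A -> F B -> P A = P (fun w => A w /\ B w) + P (fun w => A w /\ ~ B w).
Proof.
  intros HA HB.
  pose proof (P_FA 2 (fun i => if Nat.eq_dec i 0 then (fun w => A w /\ B w) else fun w => A w /\ ~ B w)) as H.
  simpl in H. rewrite <- (P_ext (fun w => exists i, (i < 2)%nat /\ (if Nat.eq_dec i 0 then (fun w => A w /\ B w) else fun w => A w /\ ~ B w) w)).
  - rewrite H; [ring| |].
    + intros i Hi. destruct (Nat.eq_dec i 0); auto using F_and, F_not.
    + intros i j Hi Hj Hij w. destruct (Nat.eq_dec i 0), (Nat.eq_dec j 0); try lia; tauto.
  - intro w; split.
    + intros [i [Hi Hw]]. destruct (Nat.eq_dec i 0); tauto.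
    + intros Hw. destruct (classic (B w)).
      * exists 0%nat; simpl; split; [lia|auto].
      * exists 1%nat; simpl; split; [lia|auto].
Qed.

Lemma P_nonneg A : F A -> 0 <= P A.
Proof. apply (ps_nonneg _ _ hP). Qed.

Lemma P_mono A B : F A -> F B -> (forall w, A w -> B w) -> P A <= P B.
Proof.
  intros HA HB Hs. rewrite (P_split B A HB HA).
  rewrite (P_ext (fun w => B w /\ A w) A) by (intro; split; [tauto|auto]).
  pose proof (P_nonneg _ (F_and _ _ HB (F_not _ HA))). lra.
Qed.

Lemma P_true : P (fun _ => True) = 1.
Proof. apply (ps_total _ _ hP). Qed.

Lemma P_le1 A : F A -> P A <= 1.
Proof. intros HA. rewrite <- P_true. apply P_mono; auto using F_true. Qed.


Lemma P_decr_lim (A : nat -> Omega -> Prop) (delta : R) :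
  (forall m, F (A m)) -> (forall m w, A (S m) w -> A m w) -> (forall m, delta <= P (A m)) ->
  delta <= P (fun w => forall m, A m w).
Proof.
  intros HF Hdec Hd.
  assert (Hdec' : forall m k w, (k <= m)%nat -> A m w -> A k w).
  { intros m k w Hkm. induction Hkm; auto. }
  set (G := fun m w => match m with 0 => ~ A 0%nat w | S k => A k w /\ ~ A (S k) w end).
  assert (HG : forall m, F (G m)).
  { intros [|m]; simpl; [apply F_not; auto| apply F_and; auto; apply F_not; auto]. }
  assert (HGn : forall m w, G m w -> ~ A m w) by (intros [|m] w; simpl; tauto).
  assert (HGd : forall m m', m <> m' -> forall w, G m w -> G m' w -> False).
  { intros m m' Hne w H1 H2.
    destruct (Nat.lt_ge_cases m m') as [Hl|Hl].
    - destruct m' as [|k]; [lia|]. simpl in H2. apply (HGn m w H1). apply (Hdec' k); [lia|tauto].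
    - destruct m as [|k]; [lia|]. simpl in H1. apply (HGn m' w H2). apply (Hdec' k); [lia|tauto]. }
  pose proof (ps_additive _ _ hP G HG HGd) as Hsum.
  assert (Hpart : forall N, sum_f_R0 (fun m => P (G m)) N = P (fun w => ~ A N w)).
  { induction N as [|N IH]; simpl; [reflexivity|]. rewrite IH.
    rewrite (P_split (fun w => ~ A (S N) w) (A N)); auto using F_not.
    rewrite (P_ext (fun w => ~ A (S N) w /\ ~ A N w) (fun w => ~ A N w)).
    - rewrite (P_ext (fun w => ~ A (S N) w /\ A N w) (G (S N))); [ring|]. intro w; simpl; tauto.
    - intro w. split; [tauto|]. intros H; split; auto. }
  set (l := P (fun w => exists m, G m w)) in *.
  assert (Hl : l <= 1 - delta).
  { destruct (Rle_dec l (1 - delta)) as [E|E]; auto. exfalso.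
    destruct (Hsum (l - (1 - delta))) as [N HN]; [lra|].
    specialize (HN N (le_n N)). rewrite Hpart in HN. unfold Rdist in HN.
    rewrite (P_compl (A N) (HF N)) in HN. specialize (Hd N).
    apply Rabs_def2 in HN. lra. }
  rewrite (P_ext (fun w => forall m, A m w) (fun w => ~ exists m, G m w)).
  - rewrite P_compl. fold l. lra. apply F_exists; auto.
  - intro w. split.
    + intros Hall [m Hm]. apply (HGn m w Hm), Hall.
    + intros Hno m. apply NNPP. intro Hc. apply Hno.
      induction m as [|m IH].
      * exists 0%nat. simpl; auto.
      * destruct (classic (A m w)) as [Ha|Ha].
        -- exists (S m). simpl; tauto.
        -- apply IH; auto.
Qed.
End Prob.

Lemma sumRl_map_nonneg_P1 {I : Type} (l : list I) f :
  (forall a, In a l -> 0 <= f a) -> 0 <= sumRl (map f l).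
Proof. intros H. induction l; simpl; [lra|]. pose proof (H a (or_introl eq_refl)).
  pose proof (IHl (fun x Hx => H x (or_intror Hx))). lra. Qed.


Lemma cheb_inner (l : list nat) (p Fv Gv : nat -> R) (Fa Ga : R) :
  sumRl (map (fun b => p b * ((Fa - Fv b) * (Ga - Gv b))) l) =
  Fa * Ga * sumRl (map p l) - Fa * sumRl (map (fun b => p b * Gv b) l)
  - Ga * sumRl (map (fun b => p b * Fv b) l) + sumRl (map (fun b => p b * (Fv b * Gv b)) l).
Proof. induction l; simpl; [ring|rewrite IHl; ring]. Qed.

Lemma cheb_outer (l : list nat) (p Fv Gv : nat -> R) (S A B C : R) :
  sumRl (map (fun a => p a * (Fv a * Gv a * S - Fv a * B - Gv a * A + C)) l) =
  S * sumRl (map (fun a => p a * (Fv a * Gv a)) l) - B * sumRl (map (fun a => p a * Fv a) l)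
  - A * sumRl (map (fun a => p a * Gv a) l) + C * sumRl (map p l).
Proof. induction l; simpl; [ring|rewrite IHl; ring]. Qed.

Lemma cheb (l : list nat) (p Fv Gv : nat -> R) :
  (forall a, In a l -> 0 <= p a) -> sumRl (map p l) = 1 ->
  (forall a b, (a <= b)%nat -> Fv a <= Fv b) -> (forall a b, (a <= b)%nat -> Gv a <= Gv b) ->
  sumRl (map (fun a => p a * Fv a) l) * sumRl (map (fun a => p a * Gv a) l)
  <= sumRl (map (fun a => p a * (Fv a * Gv a)) l).
Proof.
  intros Hp Hs HF HG.
  set (A := sumRl (map (fun a => p a * Fv a) l)).
  set (B := sumRl (map (fun a => p a * Gv a) l)).
  set (C := sumRl (map (fun a => p a * (Fv a * Gv a)) l)).
  assert (Hnn : 0 <= sumRl (map (fun a => p a * sumRl (map (fun b => p b * ((Fv a - Fv b) * (Gv a - Gv b))) l)) l)).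
  { apply sumRl_map_nonneg_P1. intros a Ha. apply Rmult_le_pos; auto.
    apply sumRl_map_nonneg_P1. intros b Hb. apply Rmult_le_pos; auto.
    destruct (Nat.le_ge_cases a b) as [H|H].
    - pose proof (HF _ _ H); pose proof (HG _ _ H). nra.
    - pose proof (HF _ _ H); pose proof (HG _ _ H). nra. }
  erewrite map_ext in Hnn; [| intro a; rewrite cheb_inner; reflexivity].
  rewrite Hs in Hnn. fold A B C in Hnn.
  rewrite (cheb_outer l p Fv Gv 1 A B C) in Hnn. fold A B C in Hnn. rewrite Hs in Hnn. lra.
Qed.

Lemma bonf {I : Type} (l : list I) (x : I -> R) : (forall i, In i l -> 0 <= x i <= 1) ->
  prodR (map (fun i => 1 - x i) l) <= 1 - sumRl (map x l) + (sumRl (map x l))^2.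
Proof.
  induction l as [|i l IH]; simpl; intros H; [lra|].
  assert (Hs : 0 <= sumRl (map x l)).
  { apply sumRl_map_nonneg_P1. intros; apply H; auto. }
  destruct (H i (or_introl eq_refl)).
  specialize (IH (fun j Hj => H j (or_intror Hj))).
  apply Rle_trans with ((1 - x i) * (1 - sumRl (map x l) + sumRl (map x l) ^ 2)).
  - apply Rmult_le_compat_l; lra.
  - nra.
Qed.

Open Scope nat_scope.

Lemma NoDup_map_inj {A B : Type} (f : A -> B) l :
  (forall x y, In x l -> In y l -> f x = f y -> x = y) -> NoDup l -> NoDup (map f l).
Proof.
  induction l as [|a l IH]; simpl; intros Hi HN; constructor.
  - intros Hc. apply in_map_iff in Hc. destruct Hc as [y [Hy Hyl]].
    inversion HN; subst. assert (y = a) by (apply Hi; auto). subst; contradiction.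
  - inversion HN; subst. apply IH; auto.
Qed.

Lemma NoDup_flat_map {A B : Type} (f : A -> list B) l :
  NoDup l -> (forall a, In a l -> NoDup (f a)) ->
  (forall a b x, In a l -> In b l -> a <> b -> In x (f a) -> In x (f b) -> False) ->
  NoDup (flat_map f l).
Proof.
  induction l as [|a l IH]; simpl; intros HN Hf Hd; [constructor|].
  inversion HN; subst. apply NoDup_app.
  - apply Hf; simpl; auto.
  - apply IH; auto. intros a0 b x K1 K2 K3; apply Hd; simpl; auto.
  - intros x Hx Hx2. apply in_flat_map in Hx2. destruct Hx2 as [b [Hb Hxb]].
    apply (Hd a b x); simpl; auto. intro; subst; contradiction.
Qed.

Section W.
Context (d : nat).

Fixpoint words (L : nat) : list (list nat) :=
  match L with
  | 0 => [[]]
  | S L => flat_map (fun a => map (cons a) (words L)) (seq 0 d)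
  end.

Lemma in_words L x : In x (words L) <-> length x = L /\ valid d x.
Proof.
  unfold valid. revert x. induction L as [|L IH]; intros x; simpl.
  - split; [intros [<-|[]]; split; auto|]. intros [H _]. destruct x; [auto|discriminate].
  - rewrite in_flat_map. split.
    + intros [a [Ha Hx]]. apply in_map_iff in Hx. destruct Hx as [y [<- Hy]].
      apply IH in Hy. destruct Hy. apply in_seq in Ha. simpl. split; [lia|]. constructor; auto. lia.
    + intros [Hl Hv]. destruct x as [|a y]; [discriminate|]. inversion Hv; subst.
      exists a. split; [apply in_seq; lia|]. apply in_map. apply IH. simpl in Hl. split; auto.
Qed.

Lemma NoDup_words L : NoDup (words L).
Proof.
  induction L; simpl; [constructor; [simpl; tauto|constructor]|].
  apply NoDup_flat_map.
  - apply seq_NoDup.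
  - intros a _. apply NoDup_map_inj; auto. intros x y _ _ H; inversion H; auto.
  - intros a b x _ _ Hab H1 H2. apply in_map_iff in H1, H2.
    destruct H1 as [? [<- _]]. destruct H2 as [? [E _]]. inversion E; auto.
Qed.

Lemma length_words L : length (words L) = d ^ L.
Proof.
  induction L; simpl; auto.
  assert (forall l, length (flat_map (fun a => map (cons a) (words L)) l) = length l * d ^ L).
  { induction l; simpl; auto. rewrite length_app, length_map, IHl, IHL. lia. }
  rewrite H, length_seq. auto.
Qed.

Definition allw (L : nat) : list (list nat) := flat_map words (seq 0 L).

Lemma in_allw L x : In x (allw L) <-> (length x < L)%nat /\ valid d x.
Proof.
  unfold allw. rewrite in_flat_map. split.
  - intros [k [Hk Hx]]. apply in_seq in Hk. apply in_words in Hx. destruct Hx; split; [lia|auto].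
  - intros [H1 H2]. exists (length x). split; [apply in_seq; lia|]. apply in_words; auto.
Qed.

Lemma NoDup_allw L : NoDup (allw L).
Proof.
  apply NoDup_flat_map; [apply seq_NoDup| intros; apply NoDup_words|].
  intros a b x _ _ Hab H1 H2. apply in_words in H1, H2. destruct H1, H2. lia.
Qed.

Definition below (v : list nat) (L : nat) : list (list nat) := map (app v) (allw L).

Lemma in_below v L y : In y (below v L) <-> exists x, y = v ++ x /\ (length x < L)%nat /\ valid d x.
Proof.
  unfold below. rewrite in_map_iff. split.
  - intros [x [<- Hx]]. apply in_allw in Hx. exists x. tauto.
  - intros [x [-> Hx]]. exists x. split; auto. apply in_allw; auto.
Qed.

Lemma NoDup_below v L : NoDup (below v L).
Proof.
  apply NoDup_map_inj; [|apply NoDup_allw].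
  intros x y _ _ H. apply app_inv_head in H. auto.
Qed.

End W.

Open Scope R_scope.

Definition upd (g : list nat -> nat) (u : list nat) (a : nat) : list nat -> nat :=
  fun x => if list_eq_dec Nat.eq_dec x u then a else g x.

Lemma upd_eq g u a : upd g u a u = a.
Proof. unfold upd. destruct (list_eq_dec Nat.eq_dec u u); congruence. Qed.
Lemma upd_neq g u a x : x <> u -> upd g u a x = g x.
Proof. unfold upd. destruct (list_eq_dec Nat.eq_dec x u); congruence. Qed.
Lemma upd_comm g u a x b : u <> x -> upd (upd g u a) x b = upd (upd g x b) u a.
Proof.
  intro H. apply functional_extensionality; intro y. unfold upd.
  destruct (list_eq_dec Nat.eq_dec y x), (list_eq_dec Nat.eq_dec y u); congruence.
Qed.
Lemma upd_same g u : upd g u (g u) = g.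
Proof. apply functional_extensionality; intro y. unfold upd. destruct (list_eq_dec Nat.eq_dec y u); congruence. Qed.

Definition depP (Phi : (list nat -> nat) -> Prop) (V : list (list nat)) : Prop :=
  forall g1 g2, (forall x, In x V -> g1 x = g2 x) -> (Phi g1 <-> Phi g2).

Lemma depP_incl Phi V V' : depP Phi V -> incl V V' -> depP Phi V'.
Proof. intros H Hi g1 g2 Hg. apply H. intros x Hx. apply Hg, Hi, Hx. Qed.

Definition ind (p : Prop) : R := if excluded_middle_informative p then 1 else 0.
Lemma ind_true (p : Prop) : p -> ind p = 1.
Proof. unfold ind; destruct (excluded_middle_informative p); tauto. Qed.
Lemma ind_false (p : Prop) : ~ p -> ind p = 0.
Proof. unfold ind; destruct (excluded_middle_informative p); tauto. Qed.
Lemma ind_01 p : 0 <= ind p <= 1.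
Proof. unfold ind; destruct (excluded_middle_informative p); lra. Qed.
Lemma ind_iff p q : (p <-> q) -> ind p = ind q.
Proof. intros H. unfold ind; destruct (excluded_middle_informative p), (excluded_middle_informative q); tauto. Qed.
Lemma ind_and p q : ind (p /\ q) = ind p * ind q.
Proof. unfold ind; destruct (excluded_middle_informative p), (excluded_middle_informative q),
  (excluded_middle_informative (p /\ q)); try tauto; lra. Qed.
Lemma ind_not p : ind (~ p) = 1 - ind p.
Proof. unfold ind; destruct (excluded_middle_informative p), (excluded_middle_informative (~p)); try tauto; lra. Qed.

Definition prodR' := prodR.

Lemma ind_forall_list {I : Type} (l : list I) (Q : I -> Prop) :
  ind (forall i, In i l -> Q i) = prodR (map (fun i => ind (Q i)) l).
Proof.
  induction l; simpl.
  - apply ind_true. tauto.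
  - rewrite <- IHl, <- ind_and. apply ind_iff. split.
    + intros H; split; auto.
    + intros [H1 H2] i [<-|Hi]; auto.
Qed.

Lemma sumRl_map_scal {I : Type} (l : list I) (c : R) f :
  sumRl (map (fun a => c * f a) l) = c * sumRl (map f l).
Proof. induction l; simpl; [ring|rewrite IHl; ring]. Qed.
Lemma sumRl_map_plus {I : Type} (l : list I) f g :
  sumRl (map (fun a => f a + g a) l) = sumRl (map f l) + sumRl (map g l).
Proof. induction l; simpl; [ring|rewrite IHl; ring]. Qed.
Lemma sumRl_map_ext {I : Type} (l : list I) f g :
  (forall a, In a l -> f a = g a) -> sumRl (map f l) = sumRl (map g l).
Proof. intros H; f_equal; apply map_ext_in; auto. Qed.
Lemma sumRl_map_le {I : Type} (l : list I) f g :
  (forall a, In a l -> f a <= g a) -> sumRl (map f l) <= sumRl (map g l).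
Proof. induction l; simpl; intros H; [lra|]. pose proof (H a (or_introl eq_refl)).
  pose proof (IHl (fun x Hx => H x (or_intror Hx))). lra. Qed.
Lemma sumRl_map_nonneg {I : Type} (l : list I) f :
  (forall a, In a l -> 0 <= f a) -> 0 <= sumRl (map f l).
Proof. intros H. induction l; simpl; [lra|]. pose proof (H a (or_introl eq_refl)).
  pose proof (IHl (fun x Hx => H x (or_intror Hx))). lra. Qed.

Lemma prodR_perm (l l' : list R) : Permutation l l' -> prodR l = prodR l'.
Proof. induction 1; simpl; try congruence; ring. Qed.

Lemma prodR_le {I : Type} (l : list I) f g :
  (forall a, In a l -> 0 <= f a <= g a) -> prodR (map f l) <= prodR (map g l).
Proof.
  induction l; simpl; intros H; [lra|].
  assert (Hn : forall (h : I -> R), (forall a, In a l -> 0 <= h a) -> 0 <= prodR (map h l)).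
  { clear. intros h Hh. induction l; simpl; [lra|]. apply Rmult_le_pos; auto with datatypes. }
  destruct (H a (or_introl eq_refl)).
  apply Rmult_le_compat; try lra.
  - apply Hn. intros x Hx. apply (H x (or_intror Hx)).
  - apply IHl. auto with datatypes.
Qed.

Lemma prodR_nonneg {I : Type} (l : list I) f :
  (forall a, In a l -> 0 <= f a) -> 0 <= prodR (map f l).
Proof. intros Hh. induction l; simpl; [lra|]. apply Rmult_le_pos; auto with datatypes. Qed.

Lemma prodR_pos {I : Type} (l : list I) f :
  (forall a, In a l -> 0 < f a) -> 0 < prodR (map f l).
Proof. intros Hh. induction l; simpl; [lra|]. apply Rmult_lt_0_compat; auto with datatypes. Qed.

Section Tree.
Context {Omega : Type} (F : (Omega -> Prop) -> Prop) (P : (Omega -> Prop) -> R)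
  (hP : is_prob_space F P) (d : nat) (Rb : list nat -> Omega -> nat)
  (hRb_rv : forall u, valid d u -> nat_rv F (Rb u))
  (hRb_ind : independent P (valid d) Rb).

Let F_ext' := @F_ext Omega F.
Let F_const' := F_const F P hP.
Let F_and' := F_and F P hP.
Let F_or' := F_or F P hP.
Let F_not' := F_not F P hP.
Let F_exists' := F_exists F P hP.
Let F_forall' := F_forall F P hP.
Let F_false' := F_false F P hP.
Let F_true' := F_true F P hP.
Let P_ext' := @P_ext Omega P.
Let P_FA' := P_FA F P hP.

Lemma M0 V Phi : Forall (valid d) V -> depP Phi V -> F (fun w => Phi (fun x => Rb x w)).
Proof.
  revert Phi. induction V as [|u V IH]; intros Phi HV Hd.
  - apply F_ext' with (A := fun _ => Phi (fun _ => 0%nat)); [|apply F_const'].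
    intro w. apply Hd. simpl; tauto.
  - inversion HV; subst.
    apply F_ext' with (A := fun w => exists k, Rb u w = k /\ Phi (upd (fun x => Rb x w) u k)).
    + intro w. split.
      * intros [k [Hk HP]]. subst k. rewrite upd_same in HP. exact HP.
      * intros HP. exists (Rb u w). split; auto. rewrite upd_same. exact HP.
    + apply F_exists'; auto. intro k. apply F_and'; auto.
      * apply (hRb_rv u H1 k).
      * apply (IH (fun g => Phi (upd g u k))); auto.
        intros g1 g2 Hg. apply Hd. intros x [<-|Hx].
        -- rewrite !upd_eq; auto.
        -- unfold upd. destruct (list_eq_dec Nat.eq_dec x u); auto.
Qed.

Variable M : nat.

Definition tr (w : Omega) : list nat -> nat := fun x => Nat.min (Rb x w) M.

Lemma Ftr V Phi : Forall (valid d) V -> depP Phi V -> F (fun w => Phi (tr w)).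
Proof.
  intros HV Hd. apply (M0 V (fun g => Phi (fun x => Nat.min (g x) M))); auto.
  intros g1 g2 Hg. apply Hd. intros x Hx. rewrite Hg; auto.
Qed.

Definition q (u : list nat) (a : nat) : R := P (fun w => tr w u = a).

Lemma F_tr_eq u a : valid d u -> F (fun w => tr w u = a).
Proof.
  intros Hu. apply (Ftr [u] (fun g => g u = a)); auto.
  intros g1 g2 Hg. rewrite Hg; simpl; tauto.
Qed.

Lemma q_nonneg u a : valid d u -> 0 <= q u a.
Proof. intros. apply (P_nonneg F P hP). apply F_tr_eq; auto. Qed.

Lemma PART B u : F B -> valid d u ->
  P B = sumRl (map (fun a => P (fun w => B w /\ tr w u = a)) (seq 0 (S M))).
Proof.
  intros HB Hu.
  rewrite <- (P_FA' (S M) (fun a w => B w /\ tr w u = a)).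
  - apply P_ext'. intro w. split.
    + intros Hw. exists (tr w u). split; auto. unfold tr. lia.
    + intros [i [_ [H _]]]; auto.
  - intros i _. apply F_and'; auto. apply F_tr_eq; auto.
  - intros i j _ _ Hij w [_ H1] [_ H2]. congruence.
Qed.

Lemma q_sum u : valid d u -> sumRl (map (fun a => q u a) (seq 0 (S M))) = 1.
Proof.
  intros Hu. rewrite <- (P_true F P hP). rewrite (PART (fun _ => True) u); auto using F_true'.
  apply sumRl_map_ext. intros a _. unfold q. apply P_ext'. tauto.
Qed.

Definition Cyl (V : list (list nat)) (g : list nat -> nat) (w : Omega) : Prop :=
  forall x, In x V -> tr w x = g x.

Lemma F_Cyl V g : Forall (valid d) V -> F (Cyl V g).
Proof.
  intros HV. apply (Ftr V (fun h => forall x, In x V -> h x = g x)); auto.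
  intros g1 g2 Hg. split; intros H x Hx; rewrite <- H by auto; [symmetry|]; apply Hg; auto.
Qed.

Lemma filter_none {A : Type} (f : A -> bool) l : (forall x, In x l -> f x = false) -> filter f l = [].
Proof. induction l; simpl; auto. intros H. rewrite H by auto. apply IHl. auto. Qed.

Definition cnt (g : list nat -> nat) (V : list (list nat)) : nat :=
  length (filter (fun x => Nat.eqb (g x) M) V).

Lemma cnt_ext g1 g2 V : (forall x, In x V -> g1 x = g2 x) -> cnt g1 V = cnt g2 V.
Proof.
  intros H. unfold cnt. f_equal. apply filter_ext_in. intros x Hx. rewrite H; auto.
Qed.

Lemma cnt_app g V1 V2 : cnt g (V1 ++ V2) = (cnt g V1 + cnt g V2)%nat.
Proof. unfold cnt. rewrite filter_app, length_app. reflexivity. Qed.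

Lemma cnt_cons g u V : cnt g (u :: V) = ((if Nat.eqb (g u) M then 1 else 0) + cnt g V)%nat.
Proof. unfold cnt. simpl. destruct (Nat.eqb (g u) M); reflexivity. Qed.

Lemma Cyl_perm V V' g w : Permutation V V' -> (Cyl V g w <-> Cyl V' g w).
Proof.
  intros Hp. unfold Cyl. split; intros H x Hx; apply H.
  - eapply Permutation_in; [apply Permutation_sym, Hp|auto].
  - eapply Permutation_in; [apply Hp|auto].
Qed.

Lemma TI_aux N : forall V g, (cnt g V <= N)%nat -> NoDup V -> Forall (valid d) V ->
  (forall x, In x V -> (g x <= M)%nat) ->
  P (Cyl V g) = prodR (map (fun x => q x (g x)) V).
Proof.
  induction N as [|N IH]; intros V g Hc HN HV Hb.
  -
    assert (Hlt : forall x, In x V -> (g x < M)%nat).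
    { intros x Hx. specialize (Hb x Hx). destruct (Nat.eq_dec (g x) M); [|lia].
      exfalso. unfold cnt in Hc. assert (In x (filter (fun x => Nat.eqb (g x) M) V)).
      { apply filter_In. split; auto. apply Nat.eqb_eq; auto. }
      destruct (filter _ V); simpl in *; [contradiction|lia]. }
    rewrite (P_ext' _ (fun w => Forall (fun x => Rb x w = g x) V)).
    + rewrite (hRb_ind V g HN HV). f_equal. apply map_ext_in. intros x Hx.
      apply P_ext'. intro w. unfold tr. specialize (Hlt x Hx). lia.
    + intro w. unfold Cyl, tr. rewrite Forall_forall. split; intros H x Hx; specialize (H x Hx);
        specialize (Hlt x Hx); lia.
  - destruct (classic (exists u0, In u0 V /\ g u0 = M)) as [[u0 [Hu0 Hgu0]]|Hno].
    2:{ apply (IH V g); auto. unfold cnt. replace (filter _ V) with (@nil (list nat)); simpl; [lia|].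
        symmetry. apply filter_none. intros x Hx. apply Nat.eqb_neq. intro E. apply Hno. eauto. }
    destruct (in_split _ _ Hu0) as [V1 [V2 ->]].
    set (V' := V1 ++ V2).
    assert (Hperm : Permutation (V1 ++ u0 :: V2) (u0 :: V')) by (symmetry; apply Permutation_middle).
    assert (HN' : NoDup (u0 :: V')) by (eapply Permutation_NoDup; eauto).
    inversion HN' as [|? ? Hnin HNV']; subst.
    assert (HV' : Forall (valid d) (u0 :: V')).
    { rewrite Forall_forall in *. intros x Hx. apply HV. eapply Permutation_in; [symmetry; eauto|auto]. }
    inversion HV' as [|? ? Hvu0 HVV']; subst.
    assert (Hb' : forall x, In x (u0 :: V') -> (g x <= M)%nat).
    { intros x Hx. apply Hb. eapply Permutation_in; [symmetry; eauto|auto]. }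
    assert (HcV : cnt g (V1 ++ u0 :: V2) = S (cnt g V')).
    { unfold V'. rewrite !cnt_app, cnt_cons, Hgu0, Nat.eqb_refl. lia. }
    rewrite (P_ext' _ (Cyl (u0 :: V') g)) by (intro; apply Cyl_perm; auto).
    rewrite (prodR_perm _ _ (Permutation_map _ Hperm)).
    set (Pi := prodR (map (fun x => q x (g x)) V')).
    assert (HPi : P (Cyl V' g) = Pi).
    { apply IH; auto; [lia|]. intros; apply Hb'; simpl; auto. }
    assert (Hsplit := PART (Cyl V' g) u0 (F_Cyl V' g HVV') Hvu0).
    rewrite seq_S, map_app, sumRl_app in Hsplit. simpl in Hsplit.
    assert (Hlast : P (fun w => Cyl V' g w /\ tr w u0 = M) = P (Cyl (u0 :: V') g)).
    { apply P_ext'. intro w. unfold Cyl. simpl. split.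
      - intros [H1 H2] x [<-|Hx]; auto. congruence.
      - intros H. split; auto. rewrite H; auto. }
    assert (Hmid : forall a, (a < M)%nat ->
       P (fun w => Cyl V' g w /\ tr w u0 = a) = q u0 a * Pi).
    { intros a Ha.
      rewrite (P_ext' _ (Cyl (u0 :: V') (upd g u0 a))).
      - rewrite (IH (u0 :: V') (upd g u0 a)); auto.
        + simpl. rewrite upd_eq. f_equal. unfold Pi. f_equal. apply map_ext_in.
          intros x Hx. rewrite upd_neq; auto. intro; subst; contradiction.
        + rewrite cnt_cons, upd_eq. replace (Nat.eqb a M) with false by (symmetry; apply Nat.eqb_neq; lia).
          rewrite (cnt_ext _ g V').
          * lia.
          * intros x Hx. apply upd_neq. intro; subst; contradiction.
        + intros x [<-|Hx]; [rewrite upd_eq; lia|]. rewrite upd_neq; [apply Hb'; simpl; auto|].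
          intro; subst; contradiction.
      - intro w. unfold Cyl. simpl. split.
        + intros [H1 H2] x [<-|Hx]; [rewrite upd_eq; auto|]. rewrite upd_neq; auto. intro; subst; contradiction.
        + intros H. split.
          * intros x Hx. rewrite H by auto. apply upd_neq. intro; subst; contradiction.
          * rewrite H by auto. apply upd_eq. }
    rewrite (sumRl_map_ext _ _ (fun a => q u0 a * Pi)) in Hsplit.
    2:{ intros a Ha. apply in_seq in Ha. apply Hmid. lia. }
    pose proof (q_sum u0 Hvu0) as Hq. rewrite seq_S, map_app, sumRl_app in Hq. simpl in Hq.
    simpl. rewrite Hgu0. fold Pi.
    rewrite HPi, Hlast in Hsplit.
    assert (E : sumRl (map (fun a => q u0 a * Pi) (seq 0 M)) = sumRl (map (fun a => q u0 a) (seq 0 M)) * Pi).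
    { rewrite Rmult_comm, <- sumRl_map_scal. apply sumRl_map_ext. intros; ring. }
    nra.
Qed.

Lemma TI V g : NoDup V -> Forall (valid d) V -> (forall x, In x V -> (g x <= M)%nat) ->
  P (Cyl V g) = prodR (map (fun x => q x (g x)) V).
Proof. intros. eapply TI_aux; eauto. Qed.

Lemma Cyl_cons u W h : NoDup (u :: W) -> Forall (valid d) (u :: W) ->
  (forall x, In x (u :: W) -> (h x <= M)%nat) ->
  P (Cyl (u :: W) h) = q u (h u) * P (Cyl W h).
Proof.
  intros HN HV Hb. rewrite !TI; auto.
  - inversion HN; auto.
  - inversion HV; auto.
  - intros; apply Hb; simpl; auto.
Qed.

Fixpoint Ex (V : list (list nat)) (f : (list nat -> nat) -> R) (h : list nat -> nat) : R :=
  match V with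
  | [] => f h
  | u :: V' => sumRl (map (fun a => q u a * Ex V' f (upd h u a)) (seq 0 (S M)))
  end.

Lemma G1_aux V : forall W h Phi, NoDup (V ++ W) -> Forall (valid d) (V ++ W) ->
  depP Phi (V ++ W) -> (forall x, In x W -> (h x <= M)%nat) ->
  P (fun w => Phi (tr w) /\ Cyl W h w) = P (Cyl W h) * Ex V (fun g => ind (Phi g)) h.
Proof.
  induction V as [|u V IH]; intros W h Phi HN HV Hd Hb; cbn [app Ex] in *.
  - destruct (classic (Phi h)) as [Hp|Hp].
    + rewrite ind_true by auto. rewrite Rmult_1_r. apply P_ext'. intro w. split; [tauto|].
      intros Hc. split; auto. apply (proj1 (Hd h (tr w) (fun x Hx => eq_sym (Hc x Hx)))); auto.
    + rewrite ind_false by auto. rewrite Rmult_0_r. rewrite <- (P_false F P hP). apply P_ext'.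
      intro w. split; [|tauto]. intros [H1 H2]. apply Hp. apply (proj1 (Hd (tr w) h H2)); auto.
  - inversion HN as [|? ? Hnin HN']; subst. inversion HV as [|? ? Hvu HV']; subst.
    assert (HN2 : NoDup (V ++ u :: W)).
    { eapply Permutation_NoDup; [apply Permutation_middle|]. constructor; auto. }
    assert (HV2 : Forall (valid d) (V ++ u :: W)).
    { eapply Permutation_Forall; [apply Permutation_middle|]. constructor; auto. }
    assert (Hd2 : depP Phi (V ++ u :: W)).
    { eapply depP_incl; eauto. intros x Hx. apply Permutation_in with (l := u :: V ++ W); auto.
      apply Permutation_middle. }
    assert (HuW : ~ In u W) by (intro; apply Hnin; apply in_or_app; auto).
    assert (HFB : F (fun w => Phi (tr w) /\ Cyl W h w)).
    { apply (Ftr (u :: V ++ W) (fun g => Phi g /\ forall x, In x W -> g x = h x)).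
      - constructor; auto.
      - intros g1 g2 Hg. split; intros [H1 H2]; split.
        + exact (proj1 (Hd g1 g2 Hg) H1).
        + intros x Hx. rewrite <- Hg; [auto|]. right; apply in_or_app; auto.
        + exact (proj2 (Hd g1 g2 Hg) H1).
        + intros x Hx. rewrite Hg; [auto|]. right; apply in_or_app; auto. }
    rewrite (PART _ u HFB Hvu). cbn [Ex].
    rewrite <- sumRl_map_scal. apply sumRl_map_ext. intros a Ha. apply in_seq in Ha.
    rewrite (P_ext' _ (fun w => Phi (tr w) /\ Cyl (u :: W) (upd h u a) w)).
    + rewrite IH; auto.
      * rewrite Cyl_cons.
        -- rewrite upd_eq. rewrite (P_ext' (Cyl W (upd h u a)) (Cyl W h)); [ring|].
           intro w; unfold Cyl; split; intros H x Hx; rewrite H by auto;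
             [|symmetry]; apply upd_neq; intro; subst; contradiction.
        -- constructor; auto. eapply NoDup_app_remove_l; eauto.
        -- constructor; auto. apply Forall_forall. intros x Hx. rewrite Forall_forall in HV'.
           apply HV'. apply in_or_app; auto.
        -- intros x [<-|Hx]; [rewrite upd_eq; lia|]. rewrite upd_neq; [auto|]. intro; subst; contradiction.
      * intros x [<-|Hx]; [rewrite upd_eq; lia|]. rewrite upd_neq; [auto|]. intro; subst; contradiction.
    + intro w. unfold Cyl; simpl. split.
      * intros [[H1 H2] H3]. split; auto. intros x [<-|Hx]; [rewrite upd_eq; auto|].
        rewrite upd_neq; [auto|]. intro; subst; contradiction.
      * intros [H1 H2]. split; [split|]; auto.
        -- intros x Hx. rewrite H2 by auto. apply upd_neq. intro; subst; contradiction.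
        -- rewrite H2 by auto. apply upd_eq.
Qed.

Lemma G1 V Phi h : NoDup V -> Forall (valid d) V -> depP Phi V ->
  P (fun w => Phi (tr w)) = Ex V (fun g => ind (Phi g)) h.
Proof.
  intros HN HV Hd.
  pose proof (G1_aux V [] h Phi) as H. rewrite app_nil_r in H.
  rewrite (P_ext' (Cyl [] h) (fun _ => True)) in H by (intro; unfold Cyl; simpl; tauto).
  rewrite (P_true F P hP), Rmult_1_l in H. rewrite <- H; auto.
  - apply P_ext'. intro w. unfold Cyl; simpl; tauto.
  - simpl; tauto.
Qed.

Lemma Ex_ext V f1 f2 h : (forall g, f1 g = f2 g) -> Ex V f1 h = Ex V f2 h.
Proof. intros H. replace f1 with f2; auto. apply functional_extensionality; auto. Qed.

Lemma Ex_const V c h : Forall (valid d) V -> Ex V (fun _ => c) h = c.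
Proof.
  revert h. induction V as [|u V IH]; intros h HV; cbn [Ex]; auto.
  inversion HV; subst.
  rewrite (sumRl_map_ext _ _ (fun a => c * q u a)).
  - rewrite sumRl_map_scal, q_sum; auto. ring.
  - intros a _. rewrite IH; auto. ring.
Qed.

Lemma Ex_plus V f1 f2 h : Ex V (fun g => f1 g + f2 g) h = Ex V f1 h + Ex V f2 h.
Proof.
  revert h. induction V as [|u V IH]; intros h; cbn [Ex]; auto.
  rewrite <- sumRl_map_plus. apply sumRl_map_ext. intros a _. rewrite IH. ring.
Qed.

Lemma Ex_scal V c f h : Ex V (fun g => c * f g) h = c * Ex V f h.
Proof.
  revert h. induction V as [|u V IH]; intros h; cbn [Ex]; auto.
  rewrite <- sumRl_map_scal. apply sumRl_map_ext. intros a _. rewrite IH. ring.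
Qed.

Lemma Ex_mono V f1 f2 h : Forall (valid d) V -> (forall g, f1 g <= f2 g) -> Ex V f1 h <= Ex V f2 h.
Proof.
  revert h. induction V as [|u V IH]; intros h HV Hf; cbn [Ex]; auto.
  inversion HV; subst. apply sumRl_map_le. intros a _.
  apply Rmult_le_compat_l; [apply q_nonneg; auto| apply IH; auto].
Qed.

Lemma Ex_sum {I : Type} V (l : list I) (f : I -> (list nat -> nat) -> R) h :
  Ex V (fun g => sumRl (map (fun i => f i g) l)) h = sumRl (map (fun i => Ex V (f i) h) l).
Proof.
  induction l; cbn [map].
  - change (sumRl []) with 0. rewrite (Ex_ext V _ (fun g => 0 * 0)) by (intros; ring).
    rewrite Ex_scal. ring.
  - unfold sumRl in *. cbn [map fold_right]. rewrite Ex_plus. rewrite IHl. reflexivity.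
Qed.

Lemma Ex_app V1 V2 f h : Ex (V1 ++ V2) f h = Ex V1 (fun g => Ex V2 f g) h.
Proof.
  revert h. induction V1 as [|u V IH]; intros h; cbn [Ex]; auto.
  apply sumRl_map_ext. intros. rewrite IH. auto.
Qed.

Definition inv (f : (list nat -> nat) -> R) (V : list (list nat)) : Prop :=
  forall g x a, In x V -> f (upd g x a) = f g.

Lemma inv_incl f V V' : inv f V' -> incl V V' -> inv f V.
Proof. intros H Hi g x a Hx. apply H, Hi, Hx. Qed.

Lemma Ex_inv_factor V c f h : inv c V -> Ex V (fun g => c g * f g) h = c h * Ex V f h.
Proof.
  revert h. induction V as [|u V IH]; intros h Hc; cbn [Ex]; auto.
  rewrite <- sumRl_map_scal. apply sumRl_map_ext. intros a _.
  rewrite IH by (eapply inv_incl; eauto; intros x Hx; simpl; auto).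
  rewrite (Hc h u a) by (simpl; auto). ring.
Qed.

Lemma Ex_upd_out V f g x a : ~ In x V -> inv f [x] -> Ex V f (upd g x a) = Ex V f g.
Proof.
  revert g. induction V as [|u V IH]; intros g Hx Hf; cbn [Ex].
  - apply Hf; simpl; auto.
  - apply sumRl_map_ext. intros b _.
    rewrite upd_comm by (intro; subst; apply Hx; simpl; auto).
    rewrite IH; auto. intro; apply Hx; simpl; auto.
Qed.

Lemma inv_Ex V f W : (forall x, In x W -> ~ In x V) -> inv f W -> inv (Ex V f) W.
Proof.
  intros Hd Hf g x a Hx. apply Ex_upd_out; auto.
  intros g' y b [<-|[]]. apply Hf; auto.
Qed.

Lemma Ex_prod2 V1 V2 f1 f2 h : (forall x, In x V1 -> ~ In x V2) ->
  inv f1 V2 -> inv f2 V1 ->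
  Ex (V1 ++ V2) (fun g => f1 g * f2 g) h = Ex V1 f1 h * Ex V2 f2 h.
Proof.
  intros Hd H1 H2. rewrite Ex_app.
  rewrite (Ex_ext V1 _ (fun g => Ex V2 f2 g * f1 g)).
  - rewrite Ex_inv_factor; [ring|]. apply inv_Ex; auto.
  - intros g. rewrite Ex_inv_factor; auto. ring.
Qed.

Lemma Ex_upd_push V f h u a : ~ In u V -> Ex V f (upd h u a) = Ex V (fun g => f (upd g u a)) h.
Proof.
  revert h. induction V as [|x V IH]; intros h Hu; cbn [Ex]; auto.
  apply sumRl_map_ext. intros b _.
  rewrite upd_comm by (intro; subst; apply Hu; simpl; auto).
  rewrite IH; auto. intro; apply Hu; simpl; auto.
Qed.

Definition mono (f : (list nat -> nat) -> R) (V : list (list nat)) : Prop :=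
  forall g x a b, In x V -> (a <= b)%nat -> f (upd g x a) <= f (upd g x b).

Lemma Ex_nonneg V f h : Forall (valid d) V -> (forall g, 0 <= f g) -> 0 <= Ex V f h.
Proof.
  intros HV Hf. rewrite <- (Ex_const V 0 h HV). apply Ex_mono; auto.
Qed.

Lemma Harris V : NoDup V -> Forall (valid d) V -> forall f1 f2 h, mono f1 V -> mono f2 V ->
  Ex V f1 h * Ex V f2 h <= Ex V (fun g => f1 g * f2 g) h.
Proof.
  induction V as [|u V IH]; intros HN HV f1 f2 h H1 H2; cbn [Ex]; [lra|].
  inversion HN as [|? ? Hu HN']; subst. inversion HV as [|? ? Hvu HV']; subst.
  assert (Hm : forall f, mono f (u :: V) -> mono f V).
  { intros f Hf g x a b Hx Hab. apply Hf; simpl; auto. }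
  apply Rle_trans with (sumRl (map (fun a => q u a * (Ex V f1 (upd h u a) * Ex V f2 (upd h u a))) (seq 0 (S M)))).
  - apply cheb.
    + intros; apply q_nonneg; auto.
    + apply q_sum; auto.
    + intros a b Hab. rewrite !Ex_upd_push by auto. apply Ex_mono; auto.
      intros g. apply H1; simpl; auto.
    + intros a b Hab. rewrite !Ex_upd_push by auto. apply Ex_mono; auto.
      intros g. apply H2; simpl; auto.
  - apply sumRl_map_le. intros a _. apply Rmult_le_compat_l; [apply q_nonneg; auto|].
    apply IH; auto.
Qed.

Lemma mono_mult f1 f2 V : (forall g, 0 <= f1 g) -> (forall g, 0 <= f2 g) -> mono f1 V -> mono f2 V ->
  mono (fun g => f1 g * f2 g) V.
Proof.
  intros P1 P2 H1 H2 g x a b Hx Hab. apply Rmult_le_compat; auto.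
Qed.

Lemma Harris_list {I : Type} V (K : list I) (f : I -> (list nat -> nat) -> R) h :
  NoDup V -> Forall (valid d) V ->
  (forall k g, In k K -> 0 <= f k g) -> (forall k, In k K -> mono (f k) V) ->
  prodR (map (fun k => Ex V (f k) h) K) <= Ex V (fun g => prodR (map (fun k => f k g) K)) h.
Proof.
  intros HN HV Hp Hm. induction K as [|k K IH]; cbn [map prodR fold_right].
  - rewrite Ex_const; auto. lra.
  - assert (Hpr : forall g, 0 <= prodR (map (fun k => f k g) K)).
    { intros g. apply prodR_nonneg. intros; apply Hp; simpl; auto. }
    assert (Hmr : mono (fun g => prodR (map (fun k => f k g) K)) V).
    { clear IH. induction K as [|k' K IHK]; cbn [map prodR fold_right].
      - intros g x a b _ _. lra.
      - apply mono_mult; [intros; apply Hp; simpl; auto| |apply Hm; simpl; auto|].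
        + intros g. apply prodR_nonneg. intros; apply Hp; simpl; auto.
        + apply IHK.
          * intros k0 g H; apply Hp; destruct H; simpl; auto.
          * intros k0 H; apply Hm; destruct H; simpl; auto.
          * intros g. apply prodR_nonneg. intros; apply Hp; simpl; auto. }
    unfold prodR in *. fold (prodR (map (fun k => Ex V (f k) h) K)).
    apply Rle_trans with (Ex V (f k) h * Ex V (fun g => prodR (map (fun k => f k g) K)) h).
    + apply Rmult_le_compat_l.
      * apply Ex_nonneg; auto. intros; apply Hp; simpl; auto.
      * apply IH; intros; [apply Hp|apply Hm]; simpl; auto.
    + apply (Harris V HN HV (f k) (fun g => prodR (map (fun k => f k g) K))); auto.
      apply Hm; simpl; auto.
Qed.

Lemma inv_prod {I : Type} (K : list I) (f : I -> (list nat -> nat) -> R) V :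
  (forall k, In k K -> inv (f k) V) -> inv (fun g => prodR (map (fun k => f k g) K)) V.
Proof.
  intros H g x a Hx. induction K as [|k K IH]; cbn [map prodR fold_right]; auto.
  unfold prodR in IH. rewrite IH by (intros; apply H; simpl; auto).
  rewrite (H k) by (simpl; auto). reflexivity.
Qed.

Lemma Ex_prodL {I : Type} (ws : list I) (Vf : I -> list (list nat)) (f : I -> (list nat -> nat) -> R) h :
  NoDup ws ->
  (forall i j, In i ws -> In j ws -> i <> j -> forall x, In x (Vf i) -> ~ In x (Vf j)) ->
  (forall i j, In i ws -> In j ws -> i <> j -> inv (f i) (Vf j)) ->
  Ex (concat (map Vf ws)) (fun g => prodR (map (fun i => f i g) ws)) h
  = prodR (map (fun i => Ex (Vf i) (f i) h) ws).
Proof.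
  induction ws as [|i ws IH]; intros HN Hd Hi; [cbn [map concat prodR fold_right Ex]; auto|].
  inversion HN as [|? ? Hiw HN']; subst.
  rewrite (Ex_ext _ _ (fun g => f i g * prodR (map (fun i => f i g) ws))) by reflexivity.
  cbn [map concat]. change (prodR (?a :: ?l)) with (a * prodR l).
  rewrite (Ex_prod2 (Vf i) (concat (map Vf ws)) (f i) (fun g => prodR (map (fun i => f i g) ws))).
  - rewrite IH; auto.
    + intros i0 j H1 H2 H3; apply Hd; simpl; auto.
    + intros i0 j H1 H2 H3; apply Hi; simpl; auto.
  - intros x Hx Hc. apply in_concat in Hc. destruct Hc as [l [Hl Hxl]].
    apply in_map_iff in Hl. destruct Hl as [j [<- Hj]].
    apply (Hd i j (or_introl eq_refl) (or_intror Hj) ltac:(intro; subst; contradiction) x); auto.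
  - intros g x a Hx. apply in_concat in Hx. destruct Hx as [l [Hl Hxl]].
    apply in_map_iff in Hl. destruct Hl as [j [<- Hj]].
    apply (Hi i j); simpl; auto. intro; subst; contradiction.
  - apply inv_prod. intros j Hj. apply Hi; simpl; auto. intro; subst; contradiction.
Qed.

Context (R_ : nat -> Omega -> nat) (hR_rv : forall z, nat_rv F (R_ z))
  (hRb_law : forall u k, valid d u -> P (fun w => Rb u w = k) = P (fun w => R_ (length u) w = k))
  (hM : (1 <= M)%nat).

Lemma depP_of_imp Phi V : (forall g1 g2, (forall x, In x V -> g1 x = g2 x) -> Phi g1 -> Phi g2) -> depP Phi V.
Proof. intros H g1 g2 Hg. split; apply H; auto. intros x Hx. symmetry; auto. Qed.

Lemma valid_firstn i w : valid d w -> valid d (firstn i w).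
Proof.
  unfold valid. rewrite !Forall_forall. intros H x Hx. apply H.
  rewrite <- (firstn_skipn i w). apply in_or_app; auto.
Qed.

Lemma valid_app a b : valid d a -> valid d b -> valid d (a ++ b).
Proof. unfold valid. intros; apply Forall_app; auto. Qed.

Definition Y (v w : list nat) (g : list nat -> nat) : Prop :=
  forall k, (k < M)%nat -> exists i, (i <= k)%nat /\ (S k - i <= g (v ++ firstn i w))%nat.

Fixpoint alive (v : list nat) (m : nat) (g : list nat -> nat) : Prop :=
  match m with
  | 0 => True
  | S m => exists w, In w (words d M) /\ Y v w g /\ alive (v ++ w) m g
  end.

Lemma in_below_firstn v w i : In w (words d M) -> (i < M)%nat -> In (v ++ firstn i w) (below d v M).
Proof.
  intros Hw Hi. apply in_words in Hw. destruct Hw as [Hl Hv].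
  apply in_below. exists (firstn i w). split; auto. split.
  - rewrite length_firstn. lia.
  - apply valid_firstn; auto.
Qed.

Lemma dep_Y v w : In w (words d M) -> depP (Y v w) (below d v M).
Proof.
  intros Hw. apply depP_of_imp. intros g1 g2 Hg HY k Hk.
  destruct (HY k Hk) as [i [Hi1 Hi2]]. exists i. split; auto.
  rewrite <- Hg; auto. apply in_below_firstn; auto. lia.
Qed.

Lemma dep_alive m : forall v, depP (alive v m) (below d v (m * M)).
Proof.
  induction m as [|m IH]; intros v; simpl.
  - intros g1 g2 _. tauto.
  - apply depP_of_imp. intros g1 g2 Hg [w [Hw [HY HA]]]. exists w. split; auto. split.
    + apply (proj1 (dep_Y v w Hw g1 g2 (fun x Hx => Hg x ltac:(
        apply in_below in Hx; destruct Hx as [y [-> [Hy1 Hy2]]]; apply in_below; exists y; split; auto; split; auto; lia)))).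
      auto.
    + apply (proj1 (IH (v ++ w) g1 g2 (fun x Hx => Hg x ltac:(
        apply in_below in Hx; destruct Hx as [y [-> [Hy1 Hy2]]]; apply in_below; exists (w ++ y);
        rewrite app_assoc; split; auto; apply in_words in Hw; destruct Hw as [Hw1 Hw2];
        rewrite length_app; split; [lia|apply valid_app; auto])))).
      auto.
Qed.

Lemma law_lt u m : valid d u -> P (fun w => (Rb u w < m)%nat) = P (fun w => (R_ (length u) w < m)%nat).
Proof.
  intros Hu.
  rewrite (P_ext' _ (fun w => exists i, (i < m)%nat /\ Rb u w = i)) by (intro w; split; [intros; exists (Rb u w); auto| intros [i [H1 H2]]; lia]).
  rewrite (P_ext' (fun w => (R_ (length u) w < m)%nat) (fun w => exists i, (i < m)%nat /\ R_ (length u) w = i)) by (intro w; split; [intros; exists (R_ (length u) w); auto| intros [i [H1 H2]]; lia]).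
  rewrite !P_FA'.
  - apply sumRl_map_ext. intros; apply hRb_law; auto.
  - intros; apply hR_rv.
  - intros i j _ _ Hij w H1 H2; congruence.
  - intros; apply hRb_rv; auto.
  - intros i j _ _ Hij w H1 H2; congruence.
Qed.

Lemma concat_single {A B : Type} (f : A -> B) l : concat (map (fun i => [f i]) l) = map f l.
Proof. induction l; simpl; auto. rewrite IHl; auto. Qed.

Definition coneprod (j : nat) : R :=
  prodR (map (fun k =>
     1 - prodR (map (fun i => P (fun w => (R_ (j * M + i)%nat w < S k - i)%nat))
                    (seq 0 (S k))))
   (seq 0 M)).

Lemma leaf_bound v w j : valid d v -> length v = (j * M)%nat -> In w (words d M) ->
  coneprod j <= P (fun om => Y v w (tr om)).
Proof.
  intros Hv Hlv Hw.
  assert (Hw' := Hw). apply in_words in Hw'. destruct Hw' as [Hlw Hvw].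
  set (x := fun i => v ++ firstn i w).
  assert (Hlx : forall i, (i <= M)%nat -> length (x i) = (j * M + i)%nat).
  { intros i Hi. unfold x. rewrite length_app, length_firstn. lia. }
  assert (Hvx : forall i, valid d (x i)).
  { intros i. unfold x. apply valid_app; auto. apply valid_firstn; auto. }
  assert (Hinj : forall l, (forall i, In i l -> (i <= M)%nat) -> NoDup l -> NoDup (map x l)).
  { intros l Hl HN. apply NoDup_map_inj; auto. intros a b Ha Hb E.
    assert (length (x a) = length (x b)) by (rewrite E; auto).
    rewrite !Hlx in H by auto. lia. }
  set (Vp := map x (seq 0 M)).
  assert (HNp : NoDup Vp).
  { apply Hinj; [intros i Hi; apply in_seq in Hi; lia| apply seq_NoDup]. }
  assert (HVp : Forall (valid d) Vp).
  { apply Forall_forall. intros y Hy. unfold Vp in Hy. apply in_map_iff in Hy. destruct Hy as [i [<- _]]. auto. }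
  set (Ak := fun k (g : list nat -> nat) => exists i, (i <= k)%nat /\ (S k - i <= g (x i))%nat).
  assert (HdA : forall k, (k < M)%nat -> depP (Ak k) Vp).
  { intros k Hk. apply depP_of_imp. intros g1 g2 Hg [i [Hi1 Hi2]]. exists i. split; auto.
    rewrite <- Hg; auto. unfold Vp. apply in_map. apply in_seq. lia. }
  assert (HdY : depP (Y v w) Vp).
  { apply depP_of_imp. intros g1 g2 Hg HY k Hk. destruct (HY k Hk) as [i [Hi1 Hi2]]. exists i.
    split; auto. rewrite <- Hg; auto. unfold Vp. apply (in_map x). apply in_seq. lia. }
  set (h0 := fun _ : list nat => 0%nat).
  rewrite (G1 Vp (Y v w) h0 HNp HVp HdY).
  rewrite (Ex_ext Vp _ (fun g => prodR (map (fun k => ind (Ak k g)) (seq 0 M)))).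
  2:{ intros g. rewrite <- ind_forall_list. apply ind_iff. unfold Y, Ak.
      split; intros H k Hk; apply H; [apply in_seq in Hk; lia| apply in_seq; lia]. }
  eapply Rle_trans; [|apply (Harris_list Vp (seq 0 M) (fun k g => ind (Ak k g)) h0 HNp HVp)].
  2:{ intros; apply ind_01. }
  2:{ intros k Hk g y a b Hy Hab. apply in_seq in Hk.
      unfold ind. destruct (excluded_middle_informative (Ak k (upd g y a))) as [HA|HA];
        destruct (excluded_middle_informative (Ak k (upd g y b))) as [HB|HB]; try lra.
      exfalso. apply HB. destruct HA as [i [Hi1 Hi2]]. exists i. split; auto.
      unfold upd in *. destruct (list_eq_dec Nat.eq_dec (x i) y); lia. }
  unfold coneprod. apply Req_le. f_equal. apply map_ext_in. intros k Hk. apply in_seq in Hk.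
  rewrite <- (G1 Vp (Ak k) h0 HNp HVp (HdA k ltac:(lia))).
  assert (HFA : F (fun om => Ak k (tr om))) by (apply (Ftr Vp); auto; apply HdA; lia).
  pose proof (P_compl F P hP _ HFA) as Hcmp.
  replace (P (fun om => Ak k (tr om))) with (1 - P (fun om => ~ Ak k (tr om))) by lra. f_equal.
  set (Vk := concat (map (fun i => [x i]) (seq 0 (S k)))).
  assert (HVk : Vk = map x (seq 0 (S k))) by apply concat_single.
  set (Nk := fun i (g : list nat -> nat) => (g (x i) < S k - i)%nat).
  assert (HdN : depP (fun g => forall i, In i (seq 0 (S k)) -> Nk i g) Vk).
  { apply depP_of_imp. intros g1 g2 Hg H i Hi. unfold Nk. rewrite <- Hg; [apply H; auto|].
    rewrite HVk. apply in_map; auto. }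
  assert (HNk : NoDup Vk).
  { rewrite HVk. apply Hinj; [intros i Hi; apply in_seq in Hi; lia| apply seq_NoDup]. }
  assert (HVVk : Forall (valid d) Vk).
  { rewrite HVk. apply Forall_forall. intros y Hy. apply in_map_iff in Hy. destruct Hy as [i [<- _]]. auto. }
  rewrite (P_ext' _ (fun om => (fun g => forall i, In i (seq 0 (S k)) -> Nk i g) (tr om))).
  2:{ intro om. unfold Ak, Nk. split.
      - intros H i Hi. apply in_seq in Hi. destruct (Nat.lt_ge_cases (tr om (x i)) (S k - i)); auto.
        exfalso. apply H. exists i. split; [lia|auto].
      - intros H [i [Hi1 Hi2]]. specialize (H i ltac:(apply in_seq; lia)). lia. }
  rewrite (G1 Vk _ h0 HNk HVVk HdN).
  rewrite (Ex_ext Vk _ (fun g => prodR (map (fun i => ind (Nk i g)) (seq 0 (S k))))).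
  2:{ intros g. apply ind_forall_list. }
  unfold Vk. rewrite (Ex_prodL (seq 0 (S k)) (fun i => [x i]) (fun i g => ind (Nk i g)) h0).
  - f_equal. apply map_ext_in. intros i Hi. apply in_seq in Hi.
    rewrite <- (G1 [x i] (Nk i) h0).
    + rewrite (P_ext' (fun om => Nk i (tr om)) (fun om => (Rb (x i) om < S k - i)%nat)) by (intro om; unfold Nk, tr; lia).
      rewrite law_lt by auto. rewrite Hlx by lia. reflexivity.
    + constructor; [simpl; tauto|constructor].
    + constructor; auto.
    + apply depP_of_imp. intros g1 g2 Hg. unfold Nk. rewrite Hg; simpl; auto.
  - apply seq_NoDup.
  - intros i1 i2 H1 H2 Hne y [<-|[]] [E|[]]. apply in_seq in H1, H2.
    assert (length (x i1) = length (x i2)) by (rewrite E; auto). rewrite !Hlx in H by lia. lia.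
  - intros i1 i2 H1 H2 Hne g y a [<-|[]]. apply in_seq in H1, H2. unfold Nk.
    rewrite upd_neq; auto. intro E.
    assert (length (x i1) = length (x i2)) by (rewrite E; auto). rewrite !Hlx in H by lia. lia.
Qed.

Lemma app_eq_len (w w' x x' : list nat) : length w = length w' -> w ++ x = w' ++ x' -> w = w'.
Proof.
  intros Hl E.
  assert (H1 : firstn (length w) (w ++ x) = w) by (rewrite firstn_app, Nat.sub_diag, firstn_all; simpl; apply app_nil_r).
  assert (H2 : firstn (length w') (w' ++ x') = w') by (rewrite firstn_app, Nat.sub_diag, firstn_all; simpl; apply app_nil_r).
  rewrite <- H1, <- H2, Hl, E. reflexivity.
Qed.

Lemma inv_of_dep Phi S V : depP Phi S -> (forall x, In x V -> ~ In x S) -> inv (fun g => ind (Phi g)) V.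
Proof.
  intros Hd Hdis g x a Hx. apply ind_iff. apply Hd. intros y Hy.
  apply upd_neq. intro E. rewrite E in Hy. apply (Hdis x Hx Hy).
Qed.

Lemma sumRl_const {I : Type} (l : list I) c : sumRl (map (fun _ => c) l) = INR (length l) * c.
Proof. induction l; simpl length; [simpl; ring|]. rewrite S_INR. simpl. rewrite IHl. ring. Qed.

Lemma alive_bound (c eps : R) (J : nat) :
  0 < eps <= 1 -> eps * (INR (d ^ M) * INR (d ^ M)) <= c - 1 ->
  (forall j, (J <= j)%nat -> c <= INR (d ^ M) * coneprod j) ->
  forall m v j, valid d v -> length v = (j * M)%nat -> (J <= j)%nat ->
  eps <= P (fun om => alive v m (tr om)).
Proof.
  intros Heps Hec Hcone m. induction m as [|m IH]; intros v j Hv Hlv HJ.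
  - simpl. rewrite (P_true F P hP). lra.
  - set (ws := words d M).
    set (D := INR (d ^ M)).
    set (Vb := below d v M).
    set (Vf := fun w => below d (v ++ w) (m * M)).
    set (Vs := Vb ++ concat (map Vf ws)).
    set (h0 := fun _ : list nat => 0%nat).
    assert (Hws : forall w, In w ws -> length w = M /\ valid d w) by (intros; apply in_words; auto).
    assert (HinVb : forall y, In y Vb -> exists x, y = v ++ x /\ (length x < M)%nat /\ valid d x)
      by (intros; apply in_below; auto).
    assert (HinVf : forall w y, In y (Vf w) -> exists x, y = v ++ w ++ x /\ (length x < m * M)%nat /\ valid d x).
    { intros w y Hy. apply in_below in Hy. destruct Hy as [x [-> Hx]]. exists x. rewrite app_assoc. auto. }
    assert (Hdisf : forall w1 w2, In w1 ws -> In w2 ws -> w1 <> w2 -> forall y, In y (Vf w1) -> ~ In y (Vf w2)).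
    { intros w1 w2 H1 H2 Hne y Hy1 Hy2. apply HinVf in Hy1, Hy2.
      destruct Hy1 as [x1 [-> _]]. destruct Hy2 as [x2 [E _]].
      apply app_inv_head in E. apply Hne. eapply app_eq_len; eauto.
      rewrite (proj1 (Hws _ H1)), (proj1 (Hws _ H2)); auto. }
    assert (Hdisb : forall w, In w ws -> forall y, In y (Vf w) -> ~ In y Vb).
    { intros w Hw y Hy1 Hy2. apply HinVf in Hy1. apply HinVb in Hy2.
      destruct Hy1 as [x1 [-> _]]. destruct Hy2 as [x2 [E [Hl2 _]]].
      apply app_inv_head in E. assert (length (w ++ x1) = length x2) by (rewrite E; auto).
      rewrite length_app, (proj1 (Hws _ Hw)) in H. lia. }
    assert (HvalVf : forall w, In w ws -> Forall (valid d) (Vf w)).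
    { intros w Hw. apply Forall_forall. intros y Hy. apply HinVf in Hy. destruct Hy as [x [-> [_ Hx]]].
      apply valid_app; auto. apply valid_app; auto. apply Hws; auto. }
    assert (HvalVb : Forall (valid d) Vb).
    { apply Forall_forall. intros y Hy. apply HinVb in Hy. destruct Hy as [x [-> [_ Hx]]]. apply valid_app; auto. }
    assert (HNVs : NoDup Vs).
    { unfold Vs. apply NoDup_app.
      - apply NoDup_below.
      - rewrite <- flat_map_concat_map. apply NoDup_flat_map.
        + apply NoDup_words.
        + intros; apply NoDup_below.
        + intros a b y Ha Hb Hab H1 H2. apply (Hdisf a b Ha Hb Hab y); auto.
      - intros y Hy Hc. apply in_concat in Hc. destruct Hc as [l [Hl Hyl]].
        apply in_map_iff in Hl. destruct Hl as [w [<- Hw]]. apply (Hdisb w Hw y); auto. }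
    assert (HVVs : Forall (valid d) Vs).
    { unfold Vs. apply Forall_app. split; auto. apply Forall_forall. intros y Hy.
      apply in_concat in Hy. destruct Hy as [l [Hl Hyl]].
      apply in_map_iff in Hl. destruct Hl as [w [<- Hw]]. specialize (HvalVf w Hw). rewrite Forall_forall in HvalVf. auto. }
    assert (Hincl : incl (below d v (S m * M)) Vs).
    { intros y Hy. apply in_below in Hy. destruct Hy as [x [-> [Hlx Hvx]]]. unfold Vs.
      apply in_or_app. destruct (Nat.lt_ge_cases (length x) M) as [Hs|Hs].
      - left. apply in_below. eauto.
      - right. apply in_concat. exists (Vf (firstn M x)). split.
        + apply in_map. apply in_words. split; [rewrite length_firstn; lia| apply valid_firstn; auto].
        + unfold Vf. apply in_below. exists (skipn M x). rewrite <- app_assoc, firstn_skipn.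
          split; auto. split.
          * rewrite length_skipn. simpl in Hlx. lia.
          * unfold valid in *. rewrite Forall_forall in *. intros z Hz. apply Hvx.
            rewrite <- (firstn_skipn M x). apply in_or_app; auto. }
    assert (HdNA : depP (fun g => ~ alive v (S m) g) Vs).
    { apply depP_incl with (below d v (S m * M)); auto.
      intros g1 g2 Hg. pose proof (dep_alive (S m) v g1 g2 Hg). tauto. }
    assert (HFA : F (fun om => alive v (S m) (tr om))).
    { apply (Ftr Vs); auto. apply depP_incl with (below d v (S m * M)); auto. apply dep_alive. }
    assert (Hlvw : forall w, In w ws -> length (v ++ w) = (S j * M)%nat).
    { intros w Hw. rewrite length_app, Hlv, (proj1 (Hws _ Hw)). simpl. lia. }
    assert (Hmain : P (fun om => ~ alive v (S m) (tr om)) <= 1 - eps * c + eps * eps * (D * D)).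
    { rewrite (G1 Vs _ h0 HNVs HVVs HdNA).
      rewrite (Ex_ext Vs _ (fun g => prodR (map (fun w => 1 - ind (Y v w g) * ind (alive (v ++ w) m g)) ws))).
      2:{ intros g. rewrite (ind_iff _ (forall w, In w ws -> ~ (Y v w g /\ alive (v ++ w) m g))).
          - rewrite ind_forall_list. f_equal. apply map_ext. intros w. rewrite ind_not, ind_and. reflexivity.
          - simpl. split.
            + intros H w Hw HYA. apply H. exists w. tauto.
            + intros H [w [Hw HYA]]. apply (H w Hw HYA). }
      unfold Vs. rewrite Ex_app.
      set (T := fun b => sumRl (map (fun w => ind (Y v w b)) ws)).
      apply Rle_trans with (Ex Vb (fun b => 1 + (- eps) * T b + eps * eps * (D * D)) h0).
      - apply Ex_mono; auto. intros b.
        rewrite (Ex_prodL ws Vf (fun w g => 1 - ind (Y v w g) * ind (alive (v ++ w) m g)) b).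
        + assert (Hfac : forall w, In w ws ->
             0 <= Ex (Vf w) (fun g => 1 - ind (Y v w g) * ind (alive (v ++ w) m g)) b <= 1 - eps * ind (Y v w b)).
          { intros w Hw. split.
            - apply Ex_nonneg; auto. intros g. pose proof (ind_01 (Y v w g)). pose proof (ind_01 (alive (v ++ w) m g)). nra.
            - rewrite (Ex_ext _ _ (fun g => 1 + (- ind (Y v w g)) * ind (alive (v ++ w) m g))) by (intros; ring).
              rewrite Ex_plus, Ex_const by auto.
              rewrite Ex_inv_factor.
              + rewrite <- (G1 (Vf w) (alive (v ++ w) m) b).
                * pose proof (IH (v ++ w) (S j) ltac:(apply valid_app; auto; apply Hws; auto) (Hlvw w Hw) ltac:(lia)).
                  pose proof (ind_01 (Y v w b)). nra.
                * apply NoDup_below.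
                * auto.
                * apply dep_alive.
              + intros g y a Hy. f_equal. apply ind_iff. apply (dep_Y v w); [auto|].
                intros z Hz. apply upd_neq. intro; subst. apply (Hdisb w Hw y); auto. }
          apply Rle_trans with (prodR (map (fun w => 1 - eps * ind (Y v w b)) ws)).
          * apply prodR_le. auto.
          * eapply Rle_trans; [apply bonf|].
            -- intros w _. pose proof (ind_01 (Y v w b)). split; nra.
            -- rewrite sumRl_map_scal. fold (T b).
               assert (HT : 0 <= T b <= D).
               { split; [apply sumRl_map_nonneg; intros; apply ind_01|].
                 unfold D. rewrite <- length_words with (d := d). fold ws. rewrite <- (Rmult_1_r (INR (length ws))), <- sumRl_const.
                 apply sumRl_map_le. intros; apply ind_01. }
               assert (HTT : T b * T b <= D * D) by (apply Rmult_le_compat; lra).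
               assert (Hee : 0 <= eps * eps) by nra.
               assert (eps * eps * (T b * T b) <= eps * eps * (D * D)) by (apply Rmult_le_compat_l; lra).
               replace ((eps * T b) ^ 2) with (eps * eps * (T b * T b)) by ring. lra.
        + apply NoDup_words.
        + auto.
        + intros w1 w2 H1 H2 Hne g y a Hy. f_equal. f_equal.
          * apply ind_iff. apply (dep_Y v w1); [auto|]. intros z Hz. apply upd_neq. intro; subst.
            apply (Hdisb w2 H2 y); auto.
          * apply ind_iff. apply (dep_alive m (v ++ w1)). intros z Hz. apply upd_neq. intro; subst.
            apply (Hdisf w2 w1 H2 H1 ltac:(auto) y); auto.
      - rewrite !Ex_plus, Ex_scal, !Ex_const by auto. unfold T. rewrite Ex_sum.
        assert (HS : c <= sumRl (map (fun w => Ex Vb (fun g => ind (Y v w g)) h0) ws)).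
        { apply Rle_trans with (sumRl (map (fun _ => coneprod j) ws)).
          - rewrite sumRl_const. unfold ws. rewrite length_words. apply Hcone; auto.
          - apply sumRl_map_le. intros w Hw. rewrite <- G1; auto.
            + apply (leaf_bound v w j); auto.
            + apply NoDup_below.
            + apply dep_Y; auto. }
        nra. }
    pose proof (P_compl F P hP _ HFA). unfold D in Hmain.
    assert (eps * (eps * (INR (d ^ M) * INR (d ^ M))) <= eps * (c - 1)) by (apply Rmult_le_compat_l; lra).
    nra.
Qed.

Lemma P_prod_single (l : list nat) (x : nat -> list nat) (Q : nat -> nat -> Prop) :
  NoDup (map x l) -> (forall i, In i l -> valid d (x i)) ->
  P (fun om => forall i, In i l -> Q i (tr om (x i))) =
  prodR (map (fun i => P (fun om => Q i (tr om (x i)))) l).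
Proof.
  intros HN Hv.
  assert (HNl : NoDup l) by (eapply NoDup_map_inv; eauto).
  set (h0 := fun _ : list nat => 0%nat).
  set (Vk := concat (map (fun i => [x i]) l)).
  assert (HVk : Vk = map x l) by apply concat_single.
  assert (HVVk : Forall (valid d) Vk).
  { rewrite HVk. apply Forall_forall. intros y Hy. apply in_map_iff in Hy. destruct Hy as [i [<- Hi]]. auto. }
  assert (Hinj : forall i1 i2, In i1 l -> In i2 l -> x i1 = x i2 -> i1 = i2).
  { clear -HN. induction l as [|a l IH]; simpl; intros i1 i2 H1 H2 E; [contradiction|].
    inversion HN as [|? ? Hn HN']; subst.
    destruct H1 as [<-|H1], H2 as [<-|H2]; auto.
    - exfalso. apply Hn. rewrite E. apply in_map; auto.
    - exfalso. apply Hn. rewrite <- E. apply in_map; auto. }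
  rewrite (G1 Vk (fun g => forall i, In i l -> Q i (g (x i))) h0).
  - rewrite (Ex_ext Vk _ (fun g => prodR (map (fun i => ind (Q i (g (x i)))) l))) by (intros; apply ind_forall_list).
    unfold Vk. rewrite (Ex_prodL l (fun i => [x i]) (fun i g => ind (Q i (g (x i)))) h0); auto.
    + f_equal. apply map_ext_in. intros i Hi.
      assert (HN1 : NoDup [x i]) by (constructor; [simpl; tauto|constructor]).
      assert (HV1 : Forall (valid d) [x i]) by (constructor; auto).
      assert (HD1 : depP (fun g => Q i (g (x i))) [x i]).
      { apply depP_of_imp. intros g1 g2 Hg. rewrite Hg; simpl; auto. }
      rewrite <- (G1 [x i] (fun g => Q i (g (x i))) h0 HN1 HV1 HD1). reflexivity.
    + intros i1 i2 H1 H2 Hne y [<-|[]] [E|[]]. apply Hne. apply Hinj; auto.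
    + intros i1 i2 H1 H2 Hne g y a [<-|[]]. rewrite upd_neq; [reflexivity|]. intro E. apply Hne. apply Hinj; auto.
  - rewrite HVk; auto.
  - auto.
  - apply depP_of_imp. intros g1 g2 Hg H i Hi. rewrite <- Hg; auto. rewrite HVk. apply in_map; auto.
Qed.

Lemma reached_valid g u : reached d g u -> valid d u.
Proof. induction 1; auto. constructor. Qed.

Lemma prefix_trans a b c : prefix a b -> prefix b c -> prefix a c.
Proof. intros [x ->] [y ->]. exists (x ++ y). rewrite app_assoc; auto. Qed.

Lemma prefix_refl a : prefix a a.
Proof. exists []. rewrite app_nil_r; auto. Qed.

Lemma reached_ext g g' u : reached d g u -> (forall x, prefix x u -> g x = g' x) -> reached d g' u.
Proof.
  induction 1 as [|x v Hx IH Hv Hp Hl]; intros Hg.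
  - constructor.
  - apply reached_step with x; auto.
    + apply IH. intros y Hy. apply Hg. eapply prefix_trans; eauto.
    + rewrite <- Hg; auto.
Qed.

Lemma Y_reached (g : list nat -> nat) v w : reached d g v -> In w (words d M) ->
  Y v w (fun x => Nat.min (g x) M) -> reached d g (v ++ w).
Proof.
  intros Hr Hw HY. apply in_words in Hw. destruct Hw as [Hlw Hvw].
  assert (Hv := reached_valid _ _ Hr).
  assert (H : forall k, (k <= M)%nat -> forall k', (k' <= k)%nat -> reached d g (v ++ firstn k' w)).
  { induction k as [|k IH]; intros Hk k' Hk'.
    - replace k' with 0%nat by lia. simpl. rewrite app_nil_r. auto.
    - destruct (Nat.eq_dec k' (S k)) as [->|Hne]; [|apply IH; lia].
      destruct (HY k ltac:(lia)) as [i [Hi1 Hi2]].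
      apply reached_step with (v ++ firstn i w).
      + apply IH; lia.
      + apply valid_app; auto. apply valid_firstn; auto.
      + exists (skipn i (firstn (S k) w)). rewrite <- app_assoc. f_equal.
        rewrite <- (firstn_skipn i (firstn (S k) w)) at 1. f_equal.
        rewrite firstn_firstn. f_equal. lia.
      + rewrite !length_app, !length_firstn. lia. }
  rewrite <- (firstn_all w). rewrite Hlw. apply (H M); auto.
Qed.

Lemma alive_reached (g : list nat -> nat) m : forall v, reached d g v -> alive v m (fun x => Nat.min (g x) M) ->
  exists u, reached d g u /\ (length v + m <= length u)%nat.
Proof.
  induction m as [|m IH]; intros v Hr Ha.
  - exists v. split; auto. lia.
  - destruct Ha as [w [Hw [HY HA]]].
    destruct (IH (v ++ w) (Y_reached g v w Hr Hw HY) HA) as [u [Hu Hl]].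
    exists u. split; auto. apply in_words in Hw. rewrite length_app in Hl. lia.
Qed.

Lemma alive_mono m : forall v g, alive v (S m) g -> alive v m g.
Proof.
  induction m as [|m IH]; intros v g H; simpl; auto.
  destruct H as [w [Hw [HY HA]]]. exists w; split; [exact Hw|split; [exact HY|apply IH; exact HA]].
Qed.

Lemma reached_prefixes_dep u : valid d u ->
  depP (fun g => reached d g u) (map (fun i => firstn i u) (seq 0 (S (length u)))).
Proof.
  intros Hu. apply depP_of_imp. intros g1 g2 Hg Hr. apply (reached_ext g1); auto.
  intros x [y ->]. apply Hg. apply in_map_iff. exists (length x). split.
  - rewrite firstn_app, Nat.sub_diag, firstn_all. simpl. apply app_nil_r.
  - apply in_seq. rewrite length_app. lia.
Qed.

Lemma F_reached u : F (fun om => reached d (fun x => Rb x om) u).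
Proof.
  destruct (classic (valid d u)) as [Hu|Hu].
  - apply (M0 (map (fun i => firstn i u) (seq 0 (S (length u)))) (fun g => reached d g u)).
    + apply Forall_forall. intros y Hy. apply in_map_iff in Hy. destruct Hy as [i [<- _]]. apply valid_firstn; auto.
    + apply reached_prefixes_dep; auto.
  - apply F_ext' with (A := fun _ => False); [|apply F_false'].
    intro om. split; [tauto|]. intros Hr. apply Hu. eapply reached_valid; eauto.
Qed.

Lemma F_list_exists {A : Type} (l : list A) (B : A -> Omega -> Prop) :
  (forall a, In a l -> F (B a)) -> F (fun om => exists a, In a l /\ B a om).
Proof.
  induction l as [|a l IH]; intros H.
  - apply F_ext' with (A := fun _ => False); [|apply F_false']. intro; split; [tauto|]. intros [? [[] _]].
  - apply F_ext' with (A := fun om => B a om \/ exists a', In a' l /\ B a' om).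
    + intro om. split.
      * intros [H1|[a' [H1 H2]]]; [exists a|exists a']; simpl; auto.
      * intros [a' [[<-|H1] H2]]; [left; auto| right; exists a'; auto].
    + apply F_or'; [apply H; simpl; auto| apply IH; intros; apply H; simpl; auto].
Qed.

Definition maxlen (l : list (list nat)) : nat := fold_right (fun x acc => Nat.max (length x) acc) 0%nat l.
Lemma maxlen_ge l x : In x l -> (length x <= maxlen l)%nat.
Proof. induction l; simpl; [tauto|]. intros [<-|H]; [lia|]. specialize (IHl H). lia. Qed.

Lemma infinite_iff (Sv : list nat -> Prop) : (forall u, Sv u -> valid d u) ->
  (infinite_set Sv <-> forall L, exists L', exists u, In u (words d L') /\ (L <= L')%nat /\ Sv u).
Proof.
  intros HS. split.
  - intros Hinf L. destruct (Hinf (allw d (S L))) as [u [Hu Hn]]. exists (length u), u.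
    split; [apply in_words; split; auto|]. split; auto.
    destruct (Nat.lt_ge_cases L (length u)); [lia|]. exfalso. apply Hn. apply in_allw. split; auto. lia.
  - intros H l. destruct (H (S (maxlen l))) as [L' [u [Hu [HL Hs]]]]. exists u. split; auto.
    intros Hin. apply maxlen_ge in Hin. apply in_words in Hu. lia.
Qed.

Lemma F_infinite : F (fun om => infinite_set (reached d (fun u => Rb u om))).
Proof.
  apply F_ext' with (A := fun om => forall L, exists L', exists u, In u (words d L') /\ (L <= L')%nat /\ reached d (fun u => Rb u om) u).
  - intro om. symmetry. apply infinite_iff. intros; eapply reached_valid; eauto.
  - apply F_forall'. intro L. apply F_exists'. intro L'.
    apply F_list_exists. intros u _. apply F_and'; [apply F_const'|apply F_reached].
Qed.

Context (hR_nz : forall z, P (fun w => R_ z w = 0%nat) < 1) (hd1 : (1 <= d)%nat).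

Lemma valid_repeat k : valid d (repeat 0%nat k).
Proof. unfold valid. apply Forall_forall. intros x Hx. apply repeat_spec in Hx. lia. Qed.

Lemma main_core (c : R) (J : nat) : 1 < c ->
  (forall j, (J <= j)%nat -> c <= INR (d ^ M) * coneprod j) ->
  F (fun om => infinite_set (reached d (fun u => Rb u om))) /\
  0 < P (fun om => infinite_set (reached d (fun u => Rb u om))).
Proof.
  intros Hc Hcone. split; [apply F_infinite|].
  set (D := INR (d ^ M)).
  assert (HD : 1 <= D).
  { unfold D. replace 1 with (INR 1) by reflexivity. apply le_INR.
    pose proof (Nat.pow_le_mono_l 1 d M hd1). rewrite Nat.pow_1_l in H. lia. }
  set (eps := (c - 1) / (c - 1 + D * D)).
  assert (Hpos : 0 < c - 1 + D * D) by nra.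
  assert (Heps : 0 < eps <= 1).
  { unfold eps. split.
    - apply Rdiv_lt_0_compat; lra.
    - apply Rmult_le_reg_r with (c - 1 + D * D); auto. unfold Rdiv. rewrite Rmult_assoc, Rinv_l by lra. nra. }
  assert (Hec : eps * (D * D) <= c - 1).
  { unfold eps. unfold Rdiv. apply Rmult_le_reg_r with (c - 1 + D * D); auto.
    replace ((c - 1) * / (c - 1 + D * D) * (D * D) * (c - 1 + D * D)) with ((c - 1) * (D * D) * ((c - 1 + D * D) * / (c - 1 + D * D))) by ring.
    rewrite Rinv_r by lra. nra. }
  set (x := fun i => repeat 0%nat i).
  set (v0 := x (J * M)%nat).
  set (path := fun g : list nat -> nat => forall i, In i (seq 0 (J * M)) -> (1 <= g (x i))%nat).
  set (Vp := map x (seq 0 (J * M))).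
  assert (HNVp : NoDup Vp).
  { apply NoDup_map_inj; [|apply seq_NoDup]. intros a b _ _ E.
    assert (length (x a) = length (x b)) by (rewrite E; auto). unfold x in H. rewrite !repeat_length in H. auto. }
  assert (HVVp : Forall (valid d) Vp).
  { apply Forall_forall. intros y Hy. apply in_map_iff in Hy. destruct Hy as [i [<- _]]. apply valid_repeat. }
  assert (Hdpath : depP path Vp).
  { apply depP_of_imp. intros g1 g2 Hg H i Hi. rewrite <- Hg; auto. apply in_map; auto. }
  set (pi := P (fun om => path (tr om))).
  assert (Hpi : 0 < pi).
  { unfold pi, path. rewrite (P_prod_single (seq 0 (J * M)) x (fun _ a => (1 <= a)%nat)); auto.
    - apply prodR_pos. intros i Hi.
      rewrite (P_ext' _ (fun om => ~ Rb (x i) om = 0%nat)) by (intro om; unfold tr; lia).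
      rewrite (P_compl F P hP) by (apply hRb_rv, valid_repeat).
      rewrite hRb_law by apply valid_repeat. specialize (hR_nz (length (x i))). lra.
    - intros; apply valid_repeat. }
  set (A := fun m om => path (tr om) /\ alive v0 m (tr om)).
  assert (Hv0 : valid d v0) by apply valid_repeat.
  assert (Hlv0 : length v0 = (J * M)%nat) by apply repeat_length.
  assert (HA : forall m, pi * eps <= P (A m)).
  { intros m. set (Va := below d v0 (m * M)).
    assert (Hdis : forall y, In y Vp -> ~ In y Va).
    { intros y Hy Hy2. apply in_map_iff in Hy. destruct Hy as [i [<- Hi]]. apply in_seq in Hi.
      apply in_below in Hy2. destruct Hy2 as [z [E _]].
      assert (length (x i) = length (v0 ++ z)) by (rewrite E; auto).
      rewrite length_app, Hlv0 in H. unfold x in H. rewrite repeat_length in H. lia. }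
    assert (HVa : Forall (valid d) Va).
    { apply Forall_forall. intros y Hy. apply in_below in Hy. destruct Hy as [z [-> [_ Hz]]]. apply valid_app; auto. }
    set (h0 := fun _ : list nat => 0%nat).
    assert (HN : NoDup (Vp ++ Va)) by (apply NoDup_app; auto; apply NoDup_below).
    assert (HV : Forall (valid d) (Vp ++ Va)) by (apply Forall_app; auto).
    assert (Hdep : depP (fun g => path g /\ alive v0 m g) (Vp ++ Va)).
    { intros g1 g2 Hg.
      assert (H1 : path g1 <-> path g2) by (apply Hdpath; intros; apply Hg; apply in_or_app; auto).
      assert (H2 : alive v0 m g1 <-> alive v0 m g2) by (apply dep_alive; intros; apply Hg; apply in_or_app; auto).
      tauto. }
    unfold A. rewrite (G1 (Vp ++ Va) _ h0 HN HV Hdep).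
    rewrite (Ex_ext _ _ (fun g => ind (path g) * ind (alive v0 m g))) by (intros; apply ind_and).
    rewrite Ex_prod2; auto.
    - rewrite <- (G1 Vp path h0 HNVp HVVp Hdpath).
      rewrite <- (G1 Va (alive v0 m) h0 (NoDup_below _ _ _) HVa (dep_alive m v0)). fold pi.
      apply Rmult_le_compat_l; [lra|].
      apply (alive_bound c eps J Heps Hec Hcone m v0 J); auto.
    - apply (inv_of_dep _ Vp); auto. intros y Hy Hy2. apply (Hdis y); auto.
    - apply (inv_of_dep _ Va); auto. apply dep_alive. }
  assert (HFA : forall m, F (A m)).
  { intros m. unfold A. apply (Ftr (Vp ++ below d v0 (m * M)) (fun g => path g /\ alive v0 m g)).
    - apply Forall_app. split; auto. apply Forall_forall. intros y Hy. apply in_below in Hy.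
      destruct Hy as [z [-> [_ Hz]]]. apply valid_app; auto.
    - intros g1 g2 Hg.
      assert (H1 : path g1 <-> path g2) by (apply Hdpath; intros; apply Hg; apply in_or_app; auto).
      assert (H2 : alive v0 m g1 <-> alive v0 m g2) by (apply dep_alive; intros; apply Hg; apply in_or_app; auto).
      tauto. }
  assert (Hlim : pi * eps <= P (fun om => forall m, A m om)).
  { apply (P_decr_lim F P hP); auto. intros m om [H1 H2]. split; auto. apply alive_mono; auto. }
  assert (Hsub : forall om, (forall m, A m om) -> infinite_set (reached d (fun u => Rb u om))).
  { intros om Hall l.
    set (g := fun u => Rb u om).
    assert (Hpath : path (tr om)) by (apply (Hall 0%nat)).
    assert (Hr0 : forall k, (k <= J * M)%nat -> reached d g (x k)).
    { induction k as [|k IH]; intros Hk.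
      - constructor.
      - apply reached_step with (x k).
        + apply IH; lia.
        + apply valid_repeat.
        + exists [0%nat]. unfold x. rewrite <- repeat_cons. reflexivity.
        + unfold x. rewrite !repeat_length. specialize (Hpath k ltac:(apply in_seq; lia)).
          unfold tr, x in Hpath. unfold g. lia. }
    destruct (alive_reached g (S (maxlen l)) v0 (Hr0 _ (le_n _)) (proj2 (Hall (S (maxlen l))))) as [u [Hu Hlu]].
    exists u. split; auto. intros Hin. apply maxlen_ge in Hin. lia. }
  apply Rlt_le_trans with (pi * eps); [apply (Rmult_lt_0_compat pi eps Hpi (proj1 Heps))|].
  apply Rle_trans with (P (fun om => forall m, A m om)); auto.
  apply (P_mono F P hP).
  - apply F_forall'. auto.
  - apply F_infinite.
  - exact Hsub.
Qed.

End Tree.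

Theorem theorem4 (d : nat) (hd : (2 <= d)%nat)
  (Omega : Type) (F : (Omega -> Prop) -> Prop) (P : (Omega -> Prop) -> R)
  (hP : is_prob_space F P)
  (R_ : nat -> Omega -> nat)
  (hR_rv : forall z, nat_rv F (R_ z))
  (hR_ind : independent P (fun _ => True) R_)
  (hR_nz : forall z, P (fun w => R_ z w = 0%nat) < 1)
  (Rb : list nat -> Omega -> nat)
  (hRb_rv : forall u, valid d u -> nat_rv F (Rb u))
  (hRb_ind : independent P (valid d) Rb)
  (hRb_law : forall u k, valid d u ->
     P (fun w => Rb u w = k) = P (fun w => R_ (length u) w = k))
  (n : nat) (hn : (1 <= n)%nat)
  (hliminf : exists c, 1 < c /\ exists J, forall j, (J <= j)%nat ->
               c <= cone_quantity P R_ d n j) :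
  F (fun w => infinite_set (reached d (fun u => Rb u w))) /\
  0 < P (fun w => infinite_set (reached d (fun u => Rb u w))).
Proof.
  destruct hliminf as [c [Hc [J HJ]]].
  apply (main_core F P hP d Rb hRb_rv hRb_ind n R_ hR_rv hRb_law hn hR_nz ltac:(lia) c J Hc).
  intros j Hj. specialize (HJ j Hj). unfold cone_quantity in HJ. rewrite pow_INR. exact HJ.
Qed.
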